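(* Let $k \ge 1$ and $\theta = 2\pi/(4k+4)$, and let $R = 1 + \dfrac{2\sin(\theta/2)}{\cos(\theta/2) - \sin(\theta/2)}$. For every finite point set $P$ in general position and every $u, w \in P$, the path produced by $\theta$-routing from $u$ to $w$ in the $\theta_{4k+4}$-graph on $P$ has length at most $R\,|uw|$. Moreover the bound is tight: for every $\varepsilon > 0$ there exist $P$ and $u,w\in P$ for which the $\theta$-routing path from $u$ to $w$ has length at least $(R-\varepsilon)|uw|$.
   Context: Cones: for $m \ge 2$, $\theta = 2\pi/m$; around each point $u$ draw $m$ rays with consecutive angular separation $\theta$, oriented so the vertical upward ray from $u$ bisects a cone $C_0^u$; cones numbered clockwise, same orientation at every point. General position: no two points on a line parallel to a cone boundary ray, no two on a line perpendicular to a cone bisector, no three collinear. The $\theta_m$-graph on $P$: for each $u\in P$ and each cone $C_i^u$ containing another point of $P$, add an edge from $u$ to the point of $C_i^u$ whose orthogonal projection onto the bisector of $C_i^u$ is closest to $u$; edges weighted by Euclidean length. $\theta$-routing with destination $t$: at the current vertex $x$, if $xt$ is an edge of the graph, follow it; otherwise follow the edge from $x$ in the cone of $x$ that contains $t$ (i.e. to the closest vertex in that cone, measured by projection onto its bisector). *)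

(* Defs.v *)
From Stdlib Require Import Reals Lra List.
Import ListNotations.
Open Scope R_scope.

Definition point := (R * R)%type.

Definition pdist (p q : point) : R :=
  sqrt ((fst q - fst p) ^ 2 + (snd q - snd p) ^ 2).

Definition dot (a b : point) : R := fst a * fst b + snd a * snd b.
Definition cross (a b : point) : R := fst a * snd b - snd a * fst b.
Definition vsub (q p : point) : point := (fst q - fst p, snd q - snd p).

Definition theta (m : nat) : R := 2 * PI / INR m.

(* unit direction obtained by rotating the upward vector (0,1) clockwise by a *)
Definition dir (a : R) : point := (sin a, cos a).

(* bisector of cone C_i (cones numbered clockwise, C_0 bisected by upward ray) *)
Definition bisector (m i : nat) : point := dir (INR i * theta m).

(* v lies in (the interior of) cone C_i^u: angle between v-u and the bisector
   is less than theta/2.  Boundary rays are irrelevant under general position. *)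
Definition in_cone (m : nat) (u : point) (i : nat) (v : point) : Prop :=
  (i < m)%nat /\ v <> u /\
  dot (vsub v u) (bisector m i) > pdist u v * cos (theta m / 2).

Definition proj (m : nat) (u : point) (i : nat) (v : point) : R :=
  dot (vsub v u) (bisector m i).

Definition general_position (m : nat) (P : list point) : Prop :=
  (* no two points on a line parallel to a cone boundary ray *)
  (forall u v j, In u P -> In v P -> u <> v -> (j < m)%nat ->
     cross (vsub v u) (dir ((2 * INR j + 1) * theta m / 2)) <> 0) /\
  (forall u v i, In u P -> In v P -> u <> v -> (i < m)%nat ->
     dot (vsub v u) (bisector m i) <> 0) /\
  (forall u v w, In u P -> In v P -> In w P -> u <> v -> u <> w -> v <> w ->
     cross (vsub v u) (vsub w u) <> 0).

Definition closest (P : list point) (m : nat) (u : point) (i : nat) (v : point) : Prop :=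
  In v P /\ in_cone m u i v /\
  forall w, In w P -> in_cone m u i w -> proj m u i v <= proj m u i w.

Definition theta_edge (P : list point) (m : nat) (u v : point) : Prop :=
  exists i, closest P m u i v \/ closest P m v i u.

Definition route_step (P : list point) (m : nat) (t x y : point) : Prop :=
  (theta_edge P m x t /\ y = t) \/
  (~ theta_edge P m x t /\ exists i, in_cone m x i t /\ closest P m x i y).

Inductive routing_path (P : list point) (m : nat) (t : point) : point -> list point -> Prop :=
| rp_done : routing_path P m t t [t]
| rp_step : forall x y l, x <> t -> route_step P m t x y ->
    routing_path P m t y l -> routing_path P m t x (x :: l).

Fixpoint path_length (l : list point) : R :=
  match l with
  | x :: ((y :: _) as l') => pdist x y + path_length l'
  | _ => 0
  end.

Definition ratio_R (m : nat) : R :=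
  1 + 2 * sin (theta m / 2) / (cos (theta m / 2) - sin (theta m / 2)).

(* Main.v *)
Require Import Defs.
From Stdlib Require Import Reals List Lra Lia Psatz ZArith Zfloor Classical.
Import ListNotations.
Open Scope R_scope.


Definition Bp (a:R) : point := (cos a, - sin a).
Definition L1 (a:R) (v:point) : R := Rabs (dot v (dir a)) + Rabs (dot v (Bp a)).
Definition nrm (v:point) : R := sqrt (fst v ^ 2 + snd v ^ 2).

Lemma pdist_nrm u v : pdist u v = nrm (vsub v u).
Proof. reflexivity. Qed.

Lemma sqrt_le_sq x y : 0 <= y -> x <= y * y -> sqrt x <= y.
Proof. intros Hy H. rewrite <- (sqrt_square y) by exact Hy. apply sqrt_le_1_alt; exact H. Qed.

Lemma sq_le_sqrt x y : 0 <= y -> y * y <= x -> y <= sqrt x.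
Proof. intros Hy H. rewrite <- (sqrt_square y) by exact Hy. apply sqrt_le_1_alt; exact H. Qed.

Lemma nrm_sq v : nrm v * nrm v = fst v ^ 2 + snd v ^ 2.
Proof. unfold nrm. apply sqrt_sqrt. nra. Qed.

Lemma nrm_ge0 v : 0 <= nrm v.
Proof. apply sqrt_pos. Qed.

Lemma decomp a v : dot v (dir a) ^ 2 + dot v (Bp a) ^ 2 = fst v ^ 2 + snd v ^ 2.
Proof.
  unfold dot, dir, Bp; simpl.
  pose proof (sin2_cos2 a) as H. unfold Rsqr in H.
  transitivity ((fst v ^ 2 + snd v ^ 2) * (sin a * sin a + cos a * cos a)); [ring|].
  rewrite H; ring.
Qed.

Lemma nrm_sq_decomp a v : nrm v * nrm v = dot v (dir a) ^ 2 + dot v (Bp a) ^ 2.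
Proof. rewrite nrm_sq, decomp; reflexivity. Qed.

Lemma L1_ge_nrm a v : nrm v <= L1 a v.
Proof.
  unfold L1. apply sqrt_le_sq.
  - pose proof (Rabs_pos (dot v (dir a))); pose proof (Rabs_pos (dot v (Bp a))); lra.
  - rewrite <- (decomp a v).
    pose proof (Rabs_pos (dot v (dir a))); pose proof (Rabs_pos (dot v (Bp a))).
    rewrite <- (pow2_abs (dot v (dir a))), <- (pow2_abs (dot v (Bp a))). nra.
Qed.

Lemma L1_ge0 a v : 0 <= L1 a v.
Proof. pose proof (L1_ge_nrm a v); pose proof (nrm_ge0 v); lra. Qed.

Lemma abs_le_sq x y : 0 <= y -> x * x <= y * y -> Rabs x <= y.
Proof. intros Hy H. unfold Rabs; destruct (Rcase_abs x); nra. Qed.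

Lemma abs_lt_sq x y : 0 <= y -> x * x < y * y -> Rabs x < y.
Proof. intros Hy H. unfold Rabs; destruct (Rcase_abs x); nra. Qed.

Lemma abs_sq x : Rabs x * Rabs x = x * x.
Proof. unfold Rabs; destruct (Rcase_abs x); nra. Qed.

Lemma lat_bound (co s P Q r : R) :
  co * co + s * s = 1 -> 0 < s -> 0 <= co -> 0 <= r -> r * r = P ^ 2 + Q ^ 2 ->
  P > r * co -> Rabs Q <= r * s.
Proof.
  intros Hcs Hs Hco Hr Hrr HP.
  assert (HP0 : 0 <= r * co) by nra.
  apply abs_le_sq; nra.
Qed.

Lemma bound_R (co s P Q r : R) :
  co * co + s * s = 1 -> 0 < s -> s <= co -> 0 <= r -> r * r = P ^ 2 + Q ^ 2 ->
  P > r * co -> Rabs P + Rabs Q <= (co + s) * r.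
Proof.
  intros Hcs Hs Hsc Hr Hrr HP.
  assert (HP0 : 0 <= r * co) by nra.
  rewrite (Rabs_pos_eq P) by lra.
  set (A := Rabs Q).
  assert (HA : 0 <= A) by apply Rabs_pos.
  assert (HAQ : A * A = Q * Q) by (unfold A; apply abs_sq).
  assert (HPp : P + r * co > 0) by lra.
  assert (H1 : P * P >= r * r * (co * co)).
  { assert ((P - r*co) * (P + r*co) >= 0) by (apply Rle_ge; apply Rmult_le_pos; lra). nra. }
  assert (Hc2 : 2 * (co * co) >= 1) by nra.
  assert (H2 : P * P + r * r * (co * co) >= r * r).
  { assert (r * r * (2 * (co*co)) >= r * r * 1) by (apply Rle_ge; apply Rmult_le_compat_l; nra). nra. }
  assert (H3 : (P * A) * (P * A) <= (r * r * co * s) * (r * r * co * s)).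
  { assert (E : (P*A)*(P*A) = (P*P) * (r*r - P*P)).
    { transitivity ((P*P)*(A*A)); [ring|]. rewrite HAQ, Hrr; ring. }
    rewrite E.
    assert ((P*P - r*r*(co*co)) * (r*r - P*P - r*r*(co*co)) <= 0) by nra.
    assert (s*s = 1 - co*co) by lra.
    nra. }
  assert (H4 : P * A <= r * r * co * s).
  { apply abs_le_sq in H3; [|nra]. rewrite Rabs_pos_eq in H3 by nra. exact H3. }
  assert ((P + A) * (P + A) <= ((co + s) * r) * ((co + s) * r)) by nra.
  apply abs_le_sq in H; [|nra]. rewrite Rabs_pos_eq in H by nra. exact H.
Qed.


Lemma dot_sub_l (w y x b : point) : dot (vsub w y) b = dot (vsub w x) b - dot (vsub y x) b.
Proof. unfold dot, vsub; simpl; ring. Qed.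

Lemma step_ineq (a co s : R) (x y w : point) :
  co * co + s * s = 1 -> 0 < s -> 0 <= co ->
  dot (vsub y x) (dir a) > nrm (vsub y x) * co ->
  dot (vsub y x) (dir a) <= dot (vsub w x) (dir a) ->
  (co - s) * nrm (vsub y x) + L1 a (vsub w y) <= L1 a (vsub w x).
Proof.
  intros Hcs Hs Hco Hin Hpr.
  pose proof (nrm_ge0 (vsub y x)) as Hr.
  pose proof (lat_bound co s (dot (vsub y x) (dir a)) (dot (vsub y x) (Bp a)) (nrm (vsub y x))
      Hcs Hs Hco Hr (nrm_sq_decomp a _) Hin) as HQ.
  unfold L1. rewrite (dot_sub_l w y x (dir a)), (dot_sub_l w y x (Bp a)).
  set (Pe := dot (vsub y x) (dir a)) in *. set (Pd := dot (vsub w x) (dir a)) in *.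
  set (Qe := dot (vsub y x) (Bp a)) in *. set (Qd := dot (vsub w x) (Bp a)) in *.
  assert (HPe : 0 <= Pe) by nra.
  rewrite (Rabs_pos_eq (Pd - Pe)) by lra. rewrite (Rabs_pos_eq Pd) by lra.
  pose proof (Rabs_triang Qd (- Qe)). rewrite Rabs_Ropp in H.
  unfold Rminus at 3. nra.
Qed.

Lemma rotP (a phi : R) (v : point) :
  dot v (dir (a + phi)) = dot v (dir a) * cos phi + dot v (Bp a) * sin phi.
Proof. unfold dot, dir, Bp; simpl. rewrite sin_plus, cos_plus. ring. Qed.

Lemma rotQ (a phi : R) (v : point) :
  dot v (Bp (a + phi)) = dot v (Bp a) * cos phi - dot v (dir a) * sin phi.
Proof. unfold dot, dir, Bp; simpl. rewrite sin_plus, cos_plus. ring. Qed.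

Definition hh (k : nat) : R := PI / (4 * (INR k + 1)).

Lemma INR_k_ge0 k : 0 <= INR k.
Proof. apply pos_INR. Qed.



Lemma hh_bounds k : (1 <= k)%nat -> 0 < hh k /\ 4 * hh k <= PI / 2.
Proof.
  intros Hk. unfold hh. pose proof PI_RGT_0.
  assert (HK : 1 <= INR k) by (apply (le_INR 1); exact Hk).
  split.
  - apply Rdiv_lt_0_compat; lra.
  - replace (4 * (PI / (4 * (INR k + 1)))) with (PI / (INR k + 1)) by (field; lra).
    apply Rmult_le_reg_r with (INR k + 1); [lra|].
    unfold Rdiv. rewrite Rmult_assoc, Rinv_l by lra. nra.
Qed.

Record trig_facts (h co s cT sT c4 s4 : R) : Prop := {
  tf_co : co = cos h; tf_s : s = sin h;
  tf_cs : co * co + s * s = 1;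
  tf_s_pos : 0 < s; tf_sc : s < co;
  tf_cT : cT = co * co - s * s; tf_sT : sT = 2 * s * co;
  tf_cT_pos : 0 < cT; tf_sT_pos : 0 < sT;
  tf_c4 : c4 = cT * cT - sT * sT; tf_s4 : s4 = 2 * sT * cT;
  tf_c4_pos : 0 <= c4; tf_s4_pos : 0 < s4;
  tf_cos2h : cos (2 * h) = cT; tf_sin2h : sin (2 * h) = sT;
  tf_cos4h : cos (4 * h) = c4; tf_sin4h : sin (4 * h) = s4 }.

Lemma get_trig_facts k : (1 <= k)%nat ->
  trig_facts (hh k) (cos (hh k)) (sin (hh k)) (cos (2 * hh k)) (sin (2 * hh k))
     (cos (4 * hh k)) (sin (4 * hh k)).
Proof.
  intros Hk. destruct (hh_bounds k Hk) as [H0 H4].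
  pose proof PI_RGT_0.
  set (h := hh k) in *.
  assert (E2 : cos (2*h) = cos h * cos h - sin h * sin h) by apply cos_2a.
  assert (S2 : sin (2*h) = 2 * sin h * cos h) by apply sin_2a.
  assert (E4 : cos (4*h) = cos (2*h) * cos (2*h) - sin (2*h) * sin (2*h))
    by (replace (4*h) with (2*(2*h)) by ring; apply cos_2a).
  assert (S4 : sin (4*h) = 2 * sin (2*h) * cos (2*h))
    by (replace (4*h) with (2*(2*h)) by ring; apply sin_2a).
  assert (Hs : 0 < sin h) by (apply sin_gt_0; lra).
  assert (Hc : 0 < cos h) by (apply cos_gt_0; lra).
  assert (HsT : 0 < sin (2*h)) by (apply sin_gt_0; lra).
  assert (HcT : 0 < cos (2*h)) by (apply cos_gt_0; lra).
  assert (Hs4 : 0 < sin (4*h)) by (apply sin_gt_0; lra).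
  assert (Hc4 : 0 <= cos (4*h)) by (apply cos_ge_0; lra).
  pose proof (sin2_cos2 h) as P; unfold Rsqr in P.
  split; try reflexivity; try lra; try nra.
Qed.


Lemma sin_ge_mid (T y : R) : 0 < T -> T <= PI / 2 -> T <= y -> y <= PI - T -> sin T <= sin y.
Proof.
  intros H0 H1 H2 H3. pose proof PI_RGT_0.
  destruct (Rle_dec y (PI/2)) as [Hy|Hy].
  - apply sin_incr_1; lra.
  - rewrite <- (sin_PI_x y). apply sin_incr_1; lra.
Qed.

Lemma int_trig (k : nat) (n : Z) : (1 <= k)%nat ->
  let T := PI / (INR k + 1) in
  (sin (IZR n * T) = 0 /\ cos (IZR n * T) * cos (IZR n * T) = 1) \/
  sin T <= Rabs (sin (IZR n * T)).
Proof.
  intros Hk T. pose proof PI_RGT_0.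
  assert (HK : 1 <= INR k) by (apply (le_INR 1); exact Hk).
  set (K := Z.of_nat (k+1)).
  assert (HKpos : (0 < K)%Z) by (unfold K; lia).
  assert (HKR : IZR K = INR k + 1) by (unfold K; rewrite <- INR_IZR_INZ, plus_INR; simpl; ring).
  pose proof (Z.div_mod n K ltac:(lia)) as Hdm.
  pose proof (Z.mod_pos_bound n K HKpos) as Hb.
  set (q := (n / K)%Z) in *. set (r := (n mod K)%Z) in *.
  assert (En : IZR n * T = IZR q * PI + IZR r * T).
  { rewrite Hdm at 1. rewrite plus_IZR, mult_IZR, HKR. unfold T. field. lra. }
  assert (Sq : sin (IZR q * PI) = 0) by (apply sin_eq_0_1; exists q; reflexivity).
  assert (Cq : cos (IZR q * PI) * cos (IZR q * PI) = 1).
  { pose proof (sin2_cos2 (IZR q * PI)) as P; unfold Rsqr in P. rewrite Sq in P. lra. }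
  rewrite En, sin_plus, cos_plus, Sq.
  destruct (Z.eq_dec r 0) as [Hr0|Hr0].
  - left. rewrite Hr0. rewrite !Rmult_0_l, sin_0, cos_0. split; [ring|]. nra.
  - right. rewrite Rmult_0_l, Rplus_0_l.
    rewrite Rabs_mult.
    assert (Hcq : Rabs (cos (IZR q * PI)) = 1).
    { unfold Rabs; destruct (Rcase_abs (cos (IZR q * PI))); nra. }
    rewrite Hcq, Rmult_1_l.
    assert (Hr1 : 1 <= IZR r) by (apply IZR_le; lia).
    assert (Hr2 : IZR r <= INR k).
    { rewrite INR_IZR_INZ. apply IZR_le. unfold K in Hb. lia. }
    assert (HT : 0 < T) by (unfold T; apply Rdiv_lt_0_compat; lra).
    assert (HT2 : T <= PI / 2).
    { unfold T. apply Rmult_le_reg_r with (INR k + 1); [lra|].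
      unfold Rdiv. rewrite Rmult_assoc, Rinv_l by lra. nra. }
    assert (HTT : T * (INR k + 1) = PI) by (unfold T; field; lra).
    rewrite Rabs_pos_eq.
    + apply sin_ge_mid; try lra; nra.
    + apply sin_ge_0; nra.
Qed.

Lemma L1_min (k : nat) (a : R) (v : point) (n : Z) : (1 <= k)%nat ->
  dot v (dir a) > nrm v * cos (hh k) ->
  L1 a v <= L1 (a + IZR n * (2 * hh k)) v.
Proof.
  intros Hk Hin.
  destruct (get_trig_facts k Hk) as [Eco Es Hcs Hs Hsc EcT EsT HcT HsT Ec4 Es4 Hc4 Hs4 Ec2 Es2 Ec4' Es4'].
  set (h := hh k) in *.
  set (co := cos h) in *. set (s := sin h) in *.
  set (cT := cos (2*h)) in *. set (sT := sin (2*h)) in *.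
  set (c4 := cos (4*h)) in *. set (s4 := sin (4*h)) in *.
  set (phi := IZR n * (2 * h)).
  unfold L1. rewrite rotP, rotQ.
  pose proof (nrm_sq_decomp a v) as Hrr.
  pose proof (nrm_ge0 v) as Hr.
  set (r := nrm v) in *.
  set (P := dot v (dir a)) in *. set (Q := dot v (Bp a)) in *.
  set (c := cos phi). set (sn := sin phi).
  assert (Hcsn : c * c + sn * sn = 1) by (pose proof (sin2_cos2 phi) as X; unfold Rsqr in X; unfold c, sn; lra).
  pose proof (int_trig k n Hk) as HT. simpl in HT.
  assert (ET : PI / (INR k + 1) = 4 * h).
  { unfold h, hh. field. pose proof (INR_k_ge0 k). lra. }
  rewrite ET in HT.
  assert (E2 : IZR n * (4 * h) = 2 * phi) by (unfold phi; ring).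
  rewrite E2, sin_2a, cos_2a in HT. fold c sn in HT.
  fold s4 in HT.
  set (c2 := c * c - sn * sn) in *. set (s2 := 2 * sn * c) in *.
  set (P' := P * c + Q * sn). set (Q' := Q * c - P * sn).
  set (C := P*P - Q*Q). set (S := 2 * P * Q).
  assert (Hkey : 2 * (P' * Q') = S * c2 - C * s2) by (unfold P', Q', S, C, c2, s2; ring).
  assert (Hnorm' : P' * P' + Q' * Q' = r * r).
  { unfold P', Q'. rewrite Hrr. transitivity ((P*P+Q*Q) * (c*c+sn*sn)); [ring|]. rewrite Hcsn; ring. }
  assert (Hmain : Rabs S <= Rabs (2 * (P' * Q'))).
  { rewrite Hkey.
    destruct HT as [[Hs0 Hc1] | Hge].
    - rewrite Hs0, Rmult_0_r, Rminus_0_r, Rabs_mult.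
      assert (Rabs c2 = 1) by (unfold Rabs; destruct (Rcase_abs c2); nra).
      rewrite H; lra.
    - assert (Hc2s2 : c2 * c2 + s2 * s2 = 1) by (unfold c2, s2; nra).
      assert (Hc4s4 : c4 * c4 + s4 * s4 = 1).
      { rewrite Ec4, Es4. assert (cT * cT + sT * sT = 1) by (rewrite EcT, EsT; nra). nra. }
      assert (Hs2abs : s4 * s4 <= s2 * s2).
      { rewrite <- (abs_sq s2). apply Rmult_le_compat; lra. }
      assert (Hc2abs : Rabs c2 <= c4) by (apply abs_le_sq; lra).
      assert (HP2 : P * P > r * r * (co * co)).
      { assert (0 <= r * co) by (apply Rmult_le_pos; lra).
        assert ((P - r*co) * (P + r*co) > 0) by (apply Rmult_lt_0_compat; lra). nra. }
      assert (HC : C > r * r * cT) by (unfold C; rewrite EcT; nra).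
      assert (HS2 : S * S = (r*r)*(r*r) - C * C) by (unfold S, C; rewrite Hrr; ring).
      assert (HcTsT : cT * cT + sT * sT = 1) by (rewrite EcT, EsT; nra).
      assert (HSabs : Rabs S <= r * r * sT).
      { apply abs_le_sq; [nra|].
        assert (0 <= r * r * cT) by nra.
        assert (C * C >= (r*r*cT)*(r*r*cT)) by nra. nra. }
      pose proof (Rabs_triang (S * c2) (- (C * s2))) as Htri.
      assert (Hlow : C * Rabs s2 - Rabs S * Rabs c2 <= Rabs (S * c2 - C * s2)).
      { pose proof (Rabs_triang (S * c2 - C * s2) (- (S * c2))) as X.
        replace (S * c2 - C * s2 + - (S * c2)) with (- (C * s2)) in X by ring.
        rewrite !Rabs_Ropp, !Rabs_mult in X. rewrite (Rabs_pos_eq C) in X by nra. lra. }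
      assert (H1 : C * s4 <= C * Rabs s2) by (apply Rmult_le_compat_l; nra).
      assert (H2 : Rabs S * Rabs c2 <= Rabs S * c4) by (apply Rmult_le_compat_l; [apply Rabs_pos| lra]).
      assert (H3 : Rabs S * (1 + c4) <= C * s4).
      { rewrite Es4, Ec4.
        assert (E1 : 1 + (cT * cT - sT * sT) = 2 * (cT * cT)) by nra. rewrite E1.
        assert (Rabs S * cT <= C * sT).
        { assert (Rabs S * cT <= r * r * sT * cT) by (apply Rmult_le_compat_r; lra).
          assert (r * r * cT * sT <= C * sT) by (apply Rmult_le_compat_r; lra). nra. }
        nra. }
      lra. }
  assert (HL : 0 <= Rabs P + Rabs Q) by (pose proof (Rabs_pos P); pose proof (Rabs_pos Q); lra).
  assert (HL' : 0 <= Rabs P' + Rabs Q') by (pose proof (Rabs_pos P'); pose proof (Rabs_pos Q'); lra).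
  rewrite <- (Rabs_pos_eq (Rabs P + Rabs Q)) by exact HL.
  apply abs_le_sq; [exact HL'|].
  assert (E3 : (Rabs P + Rabs Q) * (Rabs P + Rabs Q) = r * r + Rabs S).
  { rewrite Hrr. unfold S. rewrite !Rabs_mult, (Rabs_pos_eq 2) by lra.
    rewrite <- (pow2_abs P), <- (pow2_abs Q). ring. }
  assert (E4 : (Rabs P' + Rabs Q') * (Rabs P' + Rabs Q') = r * r + Rabs (2 * (P' * Q'))).
  { rewrite <- Hnorm'. rewrite !Rabs_mult, (Rabs_pos_eq 2) by lra.
    rewrite <- (abs_sq P'), <- (abs_sq Q'). ring. }
  rewrite E3, E4. lra.
Qed.


Lemma INR_m k : INR (4 * k + 4) = 4 * (INR k + 1).
Proof. rewrite plus_INR, mult_INR. simpl. ring. Qed.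

Lemma theta_hh k : theta (4 * k + 4) = 2 * hh k.
Proof. unfold theta, hh. rewrite INR_m. field. pose proof (pos_INR k). lra. Qed.

Lemma polar (v : point) : 0 < nrm v ->
  exists al, 0 <= al <= 2 * PI /\ fst v = nrm v * sin al /\ snd v = nrm v * cos al.
Proof.
  intros Hr. set (r := nrm v) in *.
  pose proof (nrm_sq v) as Hrr. fold r in Hrr.
  set (c0 := snd v / r).
  assert (Hc0 : -1 <= c0 <= 1).
  { unfold c0. split.
    - apply Rmult_le_reg_r with r; [lra|]. unfold Rdiv. rewrite Rmult_assoc, Rinv_l by lra. nra.
    - apply Rmult_le_reg_r with r; [lra|]. unfold Rdiv. rewrite Rmult_assoc, Rinv_l by lra. nra. }
  assert (Hs0 : sin (acos c0) = Rabs (fst v) / r).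
  { rewrite sin_acos by exact Hc0. unfold Rsqr.
    assert (E : 1 - c0 * c0 = (Rabs (fst v) / r) * (Rabs (fst v) / r)).
    { replace (Rabs (fst v) / r * (Rabs (fst v) / r)) with ((Rabs (fst v) * Rabs (fst v)) / (r * r)) by (field; lra).
      rewrite abs_sq. unfold c0. field_simplify_eq; [|lra]. nra. }
    rewrite E. apply sqrt_square. apply Rmult_le_pos; [apply Rabs_pos| left; apply Rinv_0_lt_compat; lra]. }
  assert (Hcc : cos (acos c0) = c0) by (apply cos_acos; exact Hc0).
  pose proof (acos_bound c0) as Hab. pose proof PI_RGT_0.
  destruct (Rle_dec 0 (fst v)) as [Hv|Hv].
  - exists (acos c0). split; [lra|]. split.
    + rewrite Hs0, Rabs_pos_eq by lra. field. lra.
    + rewrite Hcc. unfold c0. field. lra.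
  - exists (2 * PI - acos c0). split; [lra|]. split.
    + rewrite sin_minus, sin_2PI, cos_2PI, Hs0, Rabs_left by lra. field. lra.
    + rewrite cos_minus, sin_2PI, cos_2PI, Hcc. unfold c0. field. lra.
Qed.

Lemma dot_polar (v : point) r al b : fst v = r * sin al -> snd v = r * cos al ->
  dot v (dir b) = r * cos (al - b).
Proof. intros H1 H2. unfold dot, dir; simpl. rewrite H1, H2, cos_minus. ring. Qed.

Lemma cross_polar (v : point) r al b : fst v = r * sin al -> snd v = r * cos al ->
  cross v (dir b) = r * sin (al - b).
Proof. intros H1 H2. unfold cross, dir; simpl. rewrite H1, H2, sin_minus. ring. Qed.

Lemma cover (k : nat) (v : point) : (1 <= k)%nat -> 0 < nrm v ->
  (forall j, (j < 4 * k + 4)%nat -> cross v (dir ((2 * INR j + 1) * theta (4 * k + 4) / 2)) <> 0) ->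
  exists i, (i < 4 * k + 4)%nat /\ dot v (dir (INR i * theta (4 * k + 4))) > nrm v * cos (theta (4 * k + 4) / 2).
Proof.
  intros Hk Hr Hgp.
  rewrite theta_hh in *.
  destruct (hh_bounds k Hk) as [Hh0 Hh4].
  set (h := hh k) in *.
  replace (2 * h / 2) with h by field.
  assert (Hgp' : forall j, (j < 4 * k + 4)%nat -> cross v (dir ((2 * INR j + 1) * h)) <> 0).
  { intros j Hj. replace ((2 * INR j + 1) * h) with ((2 * INR j + 1) * (2 * h) / 2) by field. apply Hgp; exact Hj. }
  clear Hgp.
  destruct (polar v Hr) as [al [Hal [H1 H2]]].
  set (r := nrm v) in *.
  pose proof PI_RGT_0.
  assert (Hmh : INR (4*k+4) * (2 * h) = 2 * PI).
  { rewrite INR_m. unfold h, hh. field. pose proof (pos_INR k); lra. }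
  set (y := (al + h) / (2 * h)).
  pose proof (Zfloor_bound y) as Hzb.
  set (z := Zfloor y) in *.
  assert (Hy1 : y * (2 * h) = al + h) by (unfold y; field; lra).
  assert (Hz0 : (0 <= z)%Z).
  { assert (-1 < IZR z) by (assert (0 < y) by (unfold y; apply Rdiv_lt_0_compat; lra); lra).
    assert (Hz : (-1 < z)%Z) by (apply lt_IZR; simpl; lra). lia. }
  assert (HzM : IZR z <= INR (4*k+4)).
  { assert (y <= INR (4*k+4) + 1/2).
    { apply Rmult_le_reg_r with (2*h); [lra|]. rewrite Hy1, Rmult_plus_distr_r, Hmh. lra. }
    assert (Hl : IZR z < INR (4*k+4) + 1) by lra.
    rewrite INR_IZR_INZ in *. rewrite <- plus_IZR in Hl. apply lt_IZR in Hl. apply IZR_le. lia. }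
  assert (Hxl : -h <= al - IZR z * (2 * h)).
  { assert (IZR z * (2*h) <= y * (2*h)) by (apply Rmult_le_compat_r; lra). lra. }
  assert (Hxr : al - IZR z * (2 * h) < h).
  { assert (y * (2*h) < (IZR z + 1) * (2*h)) by (apply Rmult_lt_compat_r; lra). lra. }
  set (i0 := Z.to_nat z).
  assert (Hi0 : INR i0 = IZR z) by (unfold i0; rewrite INR_IZR_INZ, Z2Nat.id; [reflexivity|lia]).
  assert (Hi0m : (i0 <= 4*k+4)%nat).
  { apply INR_le. rewrite Hi0. exact HzM. }
  assert (Hgen : forall i x, (i < 4*k+4)%nat -> -h <= x < h ->
            dot v (dir (INR i * (2*h))) = r * cos x ->
            (x = -h -> False) ->
            dot v (dir (INR i * (2*h))) > r * cos h).
  { intros i x Hi Hx Hd Hne. rewrite Hd. apply Rmult_lt_compat_l; [exact Hr|].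
    rewrite <- (cos_neg x) . 
    destruct (Rle_dec 0 x) as [Hx0|Hx0].
    - rewrite cos_neg. apply cos_decreasing_1; lra.
    - assert (x <> -h) by (intro; apply Hne; assumption).
      apply cos_decreasing_1; lra. }
  destruct (Nat.eq_dec i0 (4*k+4)) as [Heq|Hne].
  - exists 0%nat. split; [lia|].
    apply (Hgen 0%nat (al - IZR z * (2*h))); [lia| lra | |].
    + rewrite (dot_polar v r al _ H1 H2). simpl INR. rewrite Rmult_0_l, Rminus_0_r.
      rewrite <- Hi0, Heq, Hmh. rewrite cos_minus, sin_2PI, cos_2PI. ring.
    + intro Hx. apply (Hgp' (4*k+3)%nat); [lia|].
      rewrite (cross_polar v r al _ H1 H2).
      replace ((2 * INR (4*k+3) + 1) * h) with al.
      * rewrite Rminus_diag, sin_0. ring.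
      * rewrite <- Hi0, Heq in Hx.
        replace (INR (4*k+3)) with (INR (4*k+4) - 1) by (rewrite !plus_INR, !mult_INR; simpl; ring).
        lra.
  - exists i0. split; [lia|].
    apply (Hgen i0 (al - IZR z * (2*h))); [lia| lra | |].
    + rewrite (dot_polar v r al _ H1 H2). rewrite Hi0. reflexivity.
    + intro Hx.
      assert (Hi1 : (1 <= i0)%nat).
      { destruct i0 as [|i0']; [|lia]. exfalso. simpl in Hi0. rewrite <- Hi0 in Hx. lra. }
      apply (Hgp' (i0 - 1)%nat); [lia|].
      rewrite (cross_polar v r al _ H1 H2).
      replace ((2 * INR (i0 - 1) + 1) * h) with al.
      * rewrite Rminus_diag, sin_0. ring.
      * rewrite minus_INR by lia. simpl INR. rewrite Hi0. lra.
Qed.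


Lemma in_cone_unf k x i y :
  in_cone (4 * k + 4) x i y <->
  ((i < 4 * k + 4)%nat /\ y <> x /\ dot (vsub y x) (dir (INR i * (2 * hh k))) > nrm (vsub y x) * cos (hh k)).
Proof.
  unfold in_cone, bisector. rewrite theta_hh. replace (2 * hh k / 2) with (hh k) by field.
  rewrite pdist_nrm. split; intros [H1 [H2 H3]]; repeat split; auto.
Qed.

Lemma nrm_pos_neq (y x : point) : y <> x -> 0 < nrm (vsub y x).
Proof.
  intros H. unfold nrm, vsub; simpl. apply sqrt_lt_R0.
  destruct y as [y1 y2], x as [x1 x2]; simpl.
  destruct (Req_dec y1 x1) as [E1|E1]; destruct (Req_dec y2 x2) as [E2|E2].
  - subst. exfalso; apply H; reflexivity.
  - assert (0 < Rsqr (y2 - x2)) by (apply Rsqr_pos_lt; lra). unfold Rsqr in *. nra.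
  - assert (0 < Rsqr (y1 - x1)) by (apply Rsqr_pos_lt; lra). unfold Rsqr in *. nra.
  - assert (0 < Rsqr (y1 - x1)) by (apply Rsqr_pos_lt; lra). unfold Rsqr in *. nra.
Qed.

Lemma routing_head P m t x l : routing_path P m t x l -> exists l', l = x :: l'.
Proof. intros H; inversion H; subst; eexists; reflexivity. Qed.

Lemma routing_from_t P m t l : routing_path P m t t l -> l = [t].
Proof. intros H; inversion H; subst; [reflexivity| congruence]. Qed.

Lemma cone_min_at k (x w : point) (i j : nat) : (1 <= k)%nat ->
  in_cone (4*k+4) x j w ->
  L1 (INR j * (2 * hh k)) (vsub w x) <= L1 (INR i * (2 * hh k)) (vsub w x).
Proof.
  intros Hk Hc. apply in_cone_unf in Hc. destruct Hc as [_ [_ Hc]].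
  replace (INR i * (2 * hh k)) with (INR j * (2 * hh k) + IZR (Z.of_nat i - Z.of_nat j) * (2 * hh k)).
  - apply L1_min; assumption.
  - rewrite minus_IZR, <- !INR_IZR_INZ. ring.
Qed.

Definition cs_co k := cos (hh k).
Definition cs_s k := sin (hh k).

Lemma bound_aux (k : nat) (P : list point) (w : point) : (1 <= k)%nat ->
  general_position (4*k+4) P -> In w P ->
  forall x l, routing_path P (4*k+4) w x l -> In x P ->
   (x = w -> path_length l = 0) /\
   (forall i, in_cone (4*k+4) x i w ->
      (cos (hh k) - sin (hh k)) * path_length l <= L1 (INR i * (2 * hh k)) (vsub w x)).
Proof.
  intros Hk [GP1 [GP2 GP3]] Hw.
  destruct (get_trig_facts k Hk) as [_ _ Hcs Hs Hsc _ _ _ _ _ _ _ _ _ _ _ _].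
  induction 1 as [| x y l Hxt Hst Hpath IH]; intros Hx.
  - split; [reflexivity|]. intros i Hc. apply in_cone_unf in Hc. destruct Hc as [_ [Hne _]]. congruence.
  - assert (Hy : In y P).
    { destruct Hst as [[_ E] | [_ [i [_ [Hy _]]]]]; [subst; exact Hw| exact Hy]. }
    destruct (IH Hy) as [IH1 IH2].
    destruct (routing_head _ _ _ _ _ Hpath) as [l' El]. subst l.
    split; [intro; congruence|].
    intros i Hc.
    change (path_length (x :: y :: l')) with (pdist x y + path_length (y :: l')).
    rewrite pdist_nrm.
    destruct (classic (y = w)) as [Eyw|Nyw].
    + subst y. rewrite IH1 by reflexivity.
      pose proof (L1_ge_nrm (INR i * (2 * hh k)) (vsub w x)).
      pose proof (nrm_ge0 (vsub w x)). nra.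
    + destruct Hst as [[_ E] | [_ [i' [Hci' [HyP [Hcy Hmin]]]]]]; [congruence|].
      destruct (cover k (vsub w y) Hk (nrm_pos_neq w y (fun E => Nyw (eq_sym E)))) as [j [Hj Hcj]].
      { intros j Hj. apply GP1; auto. }
      assert (Hcj' : in_cone (4*k+4) y j w).
      { unfold in_cone. split; [exact Hj|]. split; [exact (fun E => Nyw (eq_sym E))|]. unfold bisector. rewrite pdist_nrm. exact Hcj. }
      pose proof (IH2 j Hcj') as Hb.
      pose proof (cone_min_at k y w i' j Hk Hcj') as Hm1.
      pose proof (cone_min_at k x w i i' Hk Hci') as Hm2.
      pose proof (Hmin w Hw Hci') as Hpr. unfold proj, bisector in Hpr. rewrite theta_hh in Hpr.
      apply in_cone_unf in Hcy. destruct Hcy as [_ [_ Hcy]].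
      pose proof (step_ineq (INR i' * (2 * hh k)) (cos (hh k)) (sin (hh k)) x y w Hcs Hs ltac:(lra) Hcy Hpr) as Hstp.
      nra.
Qed.


Definition Vmin (k : nat) (v : point) : R :=
  fold_right (fun j acc => Rmin (L1 (INR j * (2 * hh k)) v) acc) (L1 0 v) (seq 0 (4*k+4)).

Lemma fold_min_le (f : nat -> R) (b : R) (l : list nat) j :
  In j l -> fold_right (fun j acc => Rmin (f j) acc) b l <= f j.
Proof.
  induction l as [|a l IH]; simpl; [tauto|].
  intros [E|H].
  - subst. apply Rmin_l.
  - eapply Rle_trans; [apply Rmin_r| apply IH; exact H].
Qed.

Lemma fold_min_ge (f : nat -> R) (b a : R) (l : list nat) :
  a <= b -> (forall j, In j l -> a <= f j) -> a <= fold_right (fun j acc => Rmin (f j) acc) b l.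
Proof.
  intros Hb. induction l as [|x l IH]; simpl; intros H; [exact Hb|].
  apply Rmin_glb; [apply H; left; reflexivity| apply IH; intros; apply H; right; assumption].
Qed.

Lemma Vmin_le k v j : (j < 4*k+4)%nat -> Vmin k v <= L1 (INR j * (2 * hh k)) v.
Proof. intros Hj. unfold Vmin. apply (fold_min_le (fun j => L1 (INR j * (2 * hh k)) v)). apply in_seq. lia. Qed.

Lemma Vmin_ge k v a : (forall j, (j < 4*k+4)%nat -> a <= L1 (INR j * (2 * hh k)) v) -> a <= Vmin k v.
Proof.
  intros H. unfold Vmin. apply (fold_min_ge (fun j => L1 (INR j * (2 * hh k)) v)).
  - specialize (H 0%nat ltac:(lia)). simpl INR in H. rewrite Rmult_0_l in H. exact H.
  - intros j Hj. apply in_seq in Hj. apply H. lia.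
Qed.

Lemma filter_lt {A : Type} (f g : A -> bool) (l : list A) (y : A) :
  (forall a, f a = true -> g a = true) -> In y l -> f y = false -> g y = true ->
  (length (filter f l) < length (filter g l))%nat.
Proof.
  intros Hfg. induction l as [|a l IH]; simpl; [tauto|].
  assert (Hle : forall l0, (length (filter f l0) <= length (filter g l0))%nat).
  { induction l0 as [|b l0 IH0]; simpl; [lia|].
    destruct (f b) eqn:Ef; [rewrite (Hfg b Ef); simpl; lia|].
    destruct (g b); simpl; lia. }
  intros [E|H] Hf Hg.
  - subst. rewrite Hf, Hg. simpl. specialize (Hle l). lia.
  - specialize (IH H Hf Hg).
    destruct (f a) eqn:Ef; [rewrite (Hfg a Ef); simpl; lia|].
    destruct (g a); simpl; lia.
Qed.

Lemma exists_min (l : list point) (Cn : point -> Prop) (f : point -> R) :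
  (exists z, In z l /\ Cn z) ->
  exists y, In y l /\ Cn y /\ forall z, In z l -> Cn z -> f y <= f z.
Proof.
  induction l as [|a l IH]; simpl; intros [z [Hz Hcz]]; [tauto|].
  destruct (classic (exists z, In z l /\ Cn z)) as [Hex|Hnex].
  - destruct (IH Hex) as [y [Hy [Hcy Hmin]]].
    destruct (classic (Cn a /\ f a < f y)) as [[Hca Hlt]|Hn].
    + exists a. split; [left; reflexivity|]. split; [exact Hca|].
      intros z0 [E|Hz0] Hc0; [subst; lra|]. specialize (Hmin z0 Hz0 Hc0). lra.
    + exists y. split; [right; exact Hy|]. split; [exact Hcy|].
      intros z0 [E|Hz0] Hc0; [|apply Hmin; assumption].
      subst. destruct (Rle_dec (f y) (f z0)) as [|Hn']; [assumption|]. exfalso; apply Hn; split; [assumption| lra].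
  - destruct Hz as [E|Hz]; [|exfalso; apply Hnex; exists z; split; assumption].
    subst. exists z. split; [left; reflexivity|]. split; [exact Hcz|].
    intros z0 [E|Hz0] Hc0; [subst; lra|]. exfalso; apply Hnex; exists z0; split; assumption.
Qed.

Lemma exists_route (k : nat) (P : list point) (w : point) : (1 <= k)%nat ->
  general_position (4*k+4) P -> In w P ->
  forall x, In x P -> exists l, routing_path P (4*k+4) w x l.
Proof.
  intros Hk [GP1 [GP2 GP3]] Hw.
  destruct (get_trig_facts k Hk) as [_ _ Hcs Hs Hsc _ _ _ _ _ _ _ _ _ _ _ _].
  set (V := fun z => Vmin k (vsub w z)).
  set (mu := fun x => length (filter (fun z => if Rlt_dec (V z) (V x) then true else false) P)).
  assert (Hind : forall n x, In x P -> (mu x <= n)%nat -> exists l, routing_path P (4*k+4) w x l).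
  { induction n as [|n IHn]; intros x Hx Hmu.
    all: destruct (classic (x = w)) as [Exw|Nxw]; [subst; exists [w]; constructor|].
    all: destruct (classic (theta_edge P (4*k+4) x w)) as [He|Hne];
      [exists [x; w]; apply rp_step with w; [exact Nxw| left; split; [exact He| reflexivity]| constructor]|].
    all: destruct (cover k (vsub w x) Hk (nrm_pos_neq w x (fun E => Nxw (eq_sym E)))) as [i [Hi Hci]];
      [intros j Hj; apply GP1; auto|].
    all: assert (Hci' : in_cone (4*k+4) x i w) by
       (unfold in_cone; split; [exact Hi|]; split; [exact (fun E => Nxw (eq_sym E))|];
        unfold bisector; rewrite pdist_nrm; exact Hci).
    all: destruct (exists_min P (in_cone (4*k+4) x i) (proj (4*k+4) x i)) as [y [Hy [Hcy Hmin]]];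
      [exists w; split; assumption|].
    all: assert (Hstep : route_step P (4*k+4) w x y) by
        (right; split; [exact Hne| exists i; split; [exact Hci'| split; [exact Hy| split; assumption]]]).
    all: destruct (classic (y = w)) as [Eyw|Nyw];
      [subst y; exists [x; w]; apply rp_step with w; [exact Nxw| exact Hstep| constructor]|].
    all: assert (HVlt : V y < V x).
    all: try (
      unfold V;
      pose proof (Vmin_le k (vsub w y) i Hi) as H1;
      assert (H2 : L1 (INR i * (2 * hh k)) (vsub w x) <= Vmin k (vsub w x))
        by (apply Vmin_ge; intros j Hj; apply cone_min_at; assumption);
      pose proof (Hmin w Hw Hci') as Hpr; unfold proj, bisector in Hpr; rewrite theta_hh in Hpr;
      pose proof Hcy as Hcy2;
      apply in_cone_unf in Hcy2; destruct Hcy2 as [_ [Hyx Hcy2]];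
      pose proof (step_ineq (INR i * (2 * hh k)) (cos (hh k)) (sin (hh k)) x y w Hcs Hs ltac:(lra) Hcy2 Hpr) as Hstp;
      pose proof (nrm_pos_neq y x Hyx) as Hp;
      assert (0 < (cos (hh k) - sin (hh k)) * nrm (vsub y x)) by (apply Rmult_lt_0_compat; lra);
      lra).
    - (* n = 0 : impossible since mu x >= 1 *)
      exfalso.
      assert (Hlt : (mu y < mu x)%nat).
      { unfold mu. apply (filter_lt _ _ P y).
        - intros a Ha. destruct (Rlt_dec (V a) (V y)); [|discriminate].
          destruct (Rlt_dec (V a) (V x)); [reflexivity| lra].
        - exact Hy.
        - destruct (Rlt_dec (V y) (V y)); [lra| reflexivity].
        - destruct (Rlt_dec (V y) (V x)); [reflexivity| lra]. }
      lia.
    - assert (Hlt : (mu y < mu x)%nat).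
      { unfold mu. apply (filter_lt _ _ P y).
        - intros a Ha. destruct (Rlt_dec (V a) (V y)); [|discriminate].
          destruct (Rlt_dec (V a) (V x)); [reflexivity| lra].
        - exact Hy.
        - destruct (Rlt_dec (V y) (V y)); [lra| reflexivity].
        - destruct (Rlt_dec (V y) (V x)); [reflexivity| lra]. }
      destruct (IHn y Hy ltac:(lia)) as [l Hl].
      exists (x :: l). apply rp_step with y; assumption. }
  intros x Hx. apply (Hind (mu x) x Hx). lia.
Qed.

Lemma ratio_eq k : (1 <= k)%nat -> ratio_R (4*k+4) = (cos (hh k) + sin (hh k)) / (cos (hh k) - sin (hh k)).
Proof.
  intros Hk. destruct (get_trig_facts k Hk) as [_ _ Hcs Hs Hsc _ _ _ _ _ _ _ _ _ _ _ _].
  unfold ratio_R. rewrite theta_hh. replace (2 * hh k / 2) with (hh k) by field.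
  field. lra.
Qed.

Theorem part1 (k : nat) (hk : (1 <= k)%nat) :
  forall (P : list point) (u w : point),
     general_position (4 * k + 4) P -> In u P -> In w P ->
     (exists l, routing_path P (4 * k + 4) w u l) /\
     (forall l, routing_path P (4 * k + 4) w u l ->
        path_length l <= ratio_R (4 * k + 4) * pdist u w).
Proof.
  intros P u w HGP Hu Hw. split; [apply exists_route; assumption|].
  intros l Hl.
  destruct (get_trig_facts k hk) as [_ _ Hcs Hs Hsc _ _ _ _ _ _ _ _ _ _ _ _].
  pose proof (bound_aux k P w hk HGP Hw u l Hl Hu) as [B1 B2].
  rewrite ratio_eq by exact hk. rewrite pdist_nrm.
  destruct (classic (u = w)) as [E|Ne].
  - rewrite (B1 E). subst. pose proof (nrm_ge0 (vsub w w)).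
    assert (0 <= (cos (hh k) + sin (hh k)) / (cos (hh k) - sin (hh k))) by (unfold Rdiv; apply Rmult_le_pos; [lra| left; apply Rinv_0_lt_compat; lra]).
    nra.
  - destruct HGP as [GP1 _].
    destruct (cover k (vsub w u) hk (nrm_pos_neq w u (fun E => Ne (eq_sym E)))) as [i [Hi Hci]];
      [intros j Hj; apply GP1; auto|].
    assert (Hci' : in_cone (4*k+4) u i w) by
       (unfold in_cone; split; [exact Hi|]; split; [exact (fun E => Ne (eq_sym E))|];
        unfold bisector; rewrite pdist_nrm; exact Hci).
    pose proof (B2 i Hci') as Hb.
    rewrite theta_hh in Hci. replace (2 * hh k / 2) with (hh k) in Hci by field.
    pose proof (bound_R (cos (hh k)) (sin (hh k)) _ _ _ Hcs Hs ltac:(lra) (nrm_ge0 (vsub w u))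
       (nrm_sq_decomp (INR i * (2 * hh k)) (vsub w u)) Hci) as HR.
    unfold L1 in Hb.
    apply Rmult_le_reg_l with (cos (hh k) - sin (hh k)); [lra|].
    replace ((cos (hh k) - sin (hh k)) * ((cos (hh k) + sin (hh k)) / (cos (hh k) - sin (hh k)) * nrm (vsub w u)))
      with ((cos (hh k) + sin (hh k)) * nrm (vsub w u)) by (field; lra).
    lra.
Qed.


Definition ev (Pr : R -> Prop) : Prop := exists eta, 0 < eta /\ forall d, 0 < d < eta -> Pr d.

Lemma ev_and (P1 P2 : R -> Prop) : ev P1 -> ev P2 -> ev (fun d => P1 d /\ P2 d).
Proof.
  intros [e1 [H1 K1]] [e2 [H2 K2]]. exists (Rmin e1 e2). split; [apply Rmin_glb_lt; lra|].
  intros d Hd. pose proof (Rmin_l e1 e2); pose proof (Rmin_r e1 e2).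
  split; [apply K1| apply K2]; lra.
Qed.

Lemma ev_impl (P1 P2 : R -> Prop) : ev P1 -> (forall d, 0 < d -> P1 d -> P2 d) -> ev P2.
Proof. intros [e [H K]] Hi. exists e. split; [lra|]. intros d Hd. apply Hi; [lra| apply K; lra]. Qed.

Lemma ev_forall (M : nat) (Pr : nat -> R -> Prop) :
  (forall i, (i < M)%nat -> ev (Pr i)) -> ev (fun d => forall i, (i < M)%nat -> Pr i d).
Proof.
  induction M as [|M IH]; intros H.
  - exists 1. split; [lra|]. intros d _ i Hi. lia.
  - destruct (IH (fun i Hi => H i ltac:(lia))) as [e1 [H1 K1]].
    destruct (H M ltac:(lia)) as [e2 [H2 K2]].
    exists (Rmin e1 e2). split; [apply Rmin_glb_lt; lra|].
    intros d Hd i Hi. pose proof (Rmin_l e1 e2); pose proof (Rmin_r e1 e2).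
    destruct (Nat.eq_dec i M) as [E|Ne].
    + subst. apply K2; lra.
    + apply K1; [lra| lia].
Qed.

Lemma ev_core (a B : R) (f : R -> R) : a <> 0 -> 0 <= B ->
  (forall d, 0 < d < 1 -> Rabs (f d - a) <= d * B) ->
  ev (fun d => f d <> 0 /\ (0 < a -> 0 < f d)).
Proof.
  intros Ha HB Hf.
  assert (Hpa : 0 < Rabs a) by (apply Rabs_pos_lt; exact Ha).
  exists (Rmin 1 (Rabs a / (2 * (B + 1)))). split.
  - apply Rmin_glb_lt; [lra|]. apply Rdiv_lt_0_compat; lra.
  - intros d Hd. pose proof (Rmin_l 1 (Rabs a / (2 * (B + 1)))). pose proof (Rmin_r 1 (Rabs a / (2 * (B + 1)))).
    assert (Hd1 : 0 < d < 1) by lra.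
    specialize (Hf d Hd1).
    assert (HdB : d * B < Rabs a).
    { assert (d < Rabs a / (2 * (B + 1))) by lra.
      assert (d * (2 * (B+1)) < Rabs a).
      { apply Rmult_lt_reg_r with (/ (2 * (B+1))); [apply Rinv_0_lt_compat; lra|].
        rewrite Rmult_assoc, Rinv_r by lra. rewrite Rmult_1_r. exact H1. }
      nra. }
    split.
    + intro E. rewrite E in Hf. rewrite Rminus_0_l, Rabs_Ropp in Hf. lra.
    + intro Hpos. rewrite Rabs_pos_eq in HdB by lra.
      unfold Rabs in Hf; destruct (Rcase_abs (f d - a)); lra.
Qed.

Definition poly4 (a0 a1 a2 a3 a4 d : R) := a0 + a1 * d + a2 * d^2 + a3 * d^3 + a4 * d^4.

Lemma poly_tail_bound (b0 b1 b2 b3 d : R) : 0 < d < 1 ->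
  Rabs (b0 * d + b1 * d^2 + b2 * d^3 + b3 * d^4) <= d * (Rabs b0 + Rabs b1 + Rabs b2 + Rabs b3).
Proof.
  intros Hd.
  assert (H2 : 0 <= d^2 <= d) by (split; [nra|]; simpl; nra).
  assert (H3 : 0 <= d^3 <= d) by (split; [simpl; nra|]; simpl; nra).
  assert (H4 : 0 <= d^4 <= d) by (split; [simpl; nra|]; simpl; nra).
  eapply Rle_trans; [apply Rabs_triang|]. eapply Rle_trans; [apply Rplus_le_compat_r; apply Rabs_triang|].
  eapply Rle_trans; [apply Rplus_le_compat_r; apply Rplus_le_compat_r; apply Rabs_triang|].
  rewrite !Rabs_mult, !(Rabs_pos_eq d), !(Rabs_pos_eq (d^2)), !(Rabs_pos_eq (d^3)), !(Rabs_pos_eq (d^4)) by lra.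
  pose proof (Rabs_pos b0); pose proof (Rabs_pos b1); pose proof (Rabs_pos b2); pose proof (Rabs_pos b3).
  assert (Rabs b1 * d^2 <= Rabs b1 * d) by (apply Rmult_le_compat_l; lra).
  assert (Rabs b2 * d^3 <= Rabs b2 * d) by (apply Rmult_le_compat_l; lra).
  assert (Rabs b3 * d^4 <= Rabs b3 * d) by (apply Rmult_le_compat_l; lra).
  nra.
Qed.

Lemma poly4_pos (a0 a1 a2 a3 a4 : R) : 0 < a0 -> ev (fun d => 0 < poly4 a0 a1 a2 a3 a4 d).
Proof.
  intros Ha.
  eapply ev_impl.
  - apply (ev_core a0 (Rabs a1 + Rabs a2 + Rabs a3 + Rabs a4) (poly4 a0 a1 a2 a3 a4)); [lra| |].
    + pose proof (Rabs_pos a1); pose proof (Rabs_pos a2); pose proof (Rabs_pos a3); pose proof (Rabs_pos a4); lra.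
    + intros d Hd. unfold poly4. replace (a0 + a1 * d + a2 * d ^ 2 + a3 * d ^ 3 + a4 * d ^ 4 - a0)
        with (a1 * d + a2 * d ^ 2 + a3 * d ^ 3 + a4 * d ^ 4) by ring. apply poly_tail_bound; exact Hd.
  - intros d _ [_ H]. apply H; exact Ha.
Qed.

Lemma poly4_nz (a0 a1 a2 a3 a4 : R) : (a0 <> 0 \/ a1 <> 0 \/ a2 <> 0) ->
  ev (fun d => poly4 a0 a1 a2 a3 a4 d <> 0).
Proof.
  intros H.
  destruct (Req_dec a0 0) as [E0|N0].
  - destruct (Req_dec a1 0) as [E1|N1].
    + assert (N2 : a2 <> 0) by (destruct H as [H|[H|H]]; tauto).
      eapply ev_impl.
      * apply (ev_core a2 (Rabs a3 + Rabs a4 + 0 + 0) (fun d => a2 + a3 * d + a4 * d^2)); [exact N2| |].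
        -- pose proof (Rabs_pos a3); pose proof (Rabs_pos a4); lra.
        -- intros d Hd. replace (a2 + a3 * d + a4 * d ^ 2 - a2) with (a3 * d + a4 * d^2 + 0 * d^3 + 0 * d^4) by ring.
           eapply Rle_trans; [apply poly_tail_bound; exact Hd|]. rewrite Rabs_R0. lra.
      * intros d Hd [Hn _]. unfold poly4. rewrite E0, E1.
        replace (0 + 0 * d + a2 * d ^ 2 + a3 * d ^ 3 + a4 * d ^ 4) with (d^2 * (a2 + a3 * d + a4 * d^2)) by ring.
        apply Rmult_integral_contrapositive. split; [apply pow_nonzero; lra| exact Hn].
    + eapply ev_impl.
      * apply (ev_core a1 (Rabs a2 + Rabs a3 + Rabs a4 + 0) (fun d => a1 + a2 * d + a3 * d^2 + a4 * d^3)); [exact N1| |].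
        -- pose proof (Rabs_pos a2); pose proof (Rabs_pos a3); pose proof (Rabs_pos a4); lra.
        -- intros d Hd. replace (a1 + a2 * d + a3 * d ^ 2 + a4 * d ^ 3 - a1) with (a2 * d + a3 * d^2 + a4 * d^3 + 0 * d^4) by ring.
           eapply Rle_trans; [apply poly_tail_bound; exact Hd|]. rewrite Rabs_R0. lra.
      * intros d Hd [Hn _]. unfold poly4. rewrite E0.
        replace (0 + a1 * d + a2 * d ^ 2 + a3 * d ^ 3 + a4 * d ^ 4) with (d * (a1 + a2 * d + a3 * d^2 + a4 * d^3)) by ring.
        apply Rmult_integral_contrapositive. split; [lra| exact Hn].
  - eapply ev_impl.
    + apply (ev_core a0 (Rabs a1 + Rabs a2 + Rabs a3 + Rabs a4) (poly4 a0 a1 a2 a3 a4)); [exact N0| |].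
      * pose proof (Rabs_pos a1); pose proof (Rabs_pos a2); pose proof (Rabs_pos a3); pose proof (Rabs_pos a4); lra.
      * intros d Hd. unfold poly4. replace (a0 + a1 * d + a2 * d ^ 2 + a3 * d ^ 3 + a4 * d ^ 4 - a0)
          with (a1 * d + a2 * d ^ 2 + a3 * d ^ 3 + a4 * d ^ 4) by ring. apply poly_tail_bound; exact Hd.
    + intros d _ [H1 _]. exact H1.
Qed.


Lemma poly4_nz' (a0 a1 a2 a3 a4 : R) : (a0 <> 0 \/ a1 <> 0 \/ a2 <> 0 \/ a3 <> 0) ->
  ev (fun d => poly4 a0 a1 a2 a3 a4 d <> 0).
Proof.
  intros H.
  destruct (classic (a0 <> 0 \/ a1 <> 0 \/ a2 <> 0)) as [H'|H']; [apply poly4_nz; exact H'|].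
  assert (E0 : a0 = 0) by (destruct (Req_dec a0 0); tauto).
  assert (E1 : a1 = 0) by (destruct (Req_dec a1 0); tauto).
  assert (E2 : a2 = 0) by (destruct (Req_dec a2 0); tauto).
  assert (N3 : a3 <> 0) by (destruct H as [H|[H|[H|H]]]; tauto).
  eapply ev_impl.
  - apply (ev_core a3 (Rabs a4 + 0 + 0 + 0) (fun d => a3 + a4 * d)); [exact N3| |].
    + pose proof (Rabs_pos a4); lra.
    + intros d Hd. replace (a3 + a4 * d - a3) with (a4 * d + 0 * d^2 + 0 * d^3 + 0 * d^4) by ring.
      eapply Rle_trans; [apply poly_tail_bound; exact Hd|]. rewrite Rabs_R0. lra.
  - intros d Hd [Hn _]. unfold poly4. rewrite E0, E1, E2.
    replace (0 + 0 * d + 0 * d ^ 2 + a3 * d ^ 3 + a4 * d ^ 4) with (d^3 * (a3 + a4 * d)) by ring.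
    apply Rmult_integral_contrapositive. split; [apply pow_nonzero; lra| exact Hn].
Qed.


Definition par (e : bool) (p : point) : R := if e then snd p else fst p.
Definition lat (e : bool) (p : point) : R := if e then fst p else snd p.

Lemma par_sub e p x : par e (vsub p x) = par e p - par e x.
Proof. destruct e; reflexivity. Qed.
Lemma lat_sub e p x : lat e (vsub p x) = lat e p - lat e x.
Proof. destruct e; reflexivity. Qed.

Definition iF (k : nat) (e : bool) : nat := if e then 0%nat else (k+1)%nat.
Definition iB (k : nat) (e : bool) : nat := if e then (2*(k+1))%nat else (3*(k+1))%nat.

Lemma cone_iff (co s P Q r : R) : co * co + s * s = 1 -> 0 < co -> 0 < s -> 0 <= r ->
  r * r = P ^ 2 + Q ^ 2 -> (P > r * co <-> (0 < P /\ co * Rabs Q < s * P)).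
Proof.
  intros Hcs Hc Hs Hr Hrr. split.
  - intros HP. assert (Hrc : 0 <= r*co) by (apply Rmult_le_pos; lra).
    assert (0 < P) by lra. split; [exact H|].
    assert (P * P > (r*co)*(r*co)) by nra.
    assert ((co * Rabs Q) * (co * Rabs Q) < (s*P)*(s*P)).
    { replace ((co * Rabs Q) * (co * Rabs Q)) with (co*co*(Rabs Q * Rabs Q)) by ring. rewrite abs_sq.
      assert (E1 : (r*co)*(r*co) = (P*P+Q*Q)*(co*co)) by (replace (r*co*(r*co)) with ((r*r)*(co*co)) by ring; rewrite Hrr; ring).
      assert (E2 : s*P*(s*P) = P*P*(1 - co*co)) by (replace (s*P*(s*P)) with (P*P*(s*s)) by ring; f_equal; lra).
      rewrite E2. rewrite E1 in H0. lra. }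
    pose proof (Rabs_pos Q).
    assert (0 <= co * Rabs Q) by (apply Rmult_le_pos; lra).
    assert (0 < s * P) by (apply Rmult_lt_0_compat; lra).
    destruct (Rlt_dec (co * Rabs Q) (s * P)) as [|Hn]; [assumption|].
    exfalso. assert (s * P * (s * P) <= (co * Rabs Q) * (co * Rabs Q)) by (apply Rmult_le_compat; lra). lra.
  - intros [HP HQ].
    assert ((co * Rabs Q) * (co * Rabs Q) < (s*P)*(s*P)).
    { pose proof (Rabs_pos Q). assert (0 <= co * Rabs Q) by nra. nra. }
    replace ((co * Rabs Q) * (co * Rabs Q)) with (co*co*(Q * Q)) in H by (rewrite <- (abs_sq Q); ring).
    assert (r * co < P).
    { assert ((r*co)*(r*co) < P * P) by nra.
      destruct (Rle_dec P (r*co)); [|lra]. assert (0 <= r * co) by nra. nra. }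
    lra.
Qed.

Lemma ang_F k : (1 <= k)%nat -> INR (k+1) * (2 * hh k) = PI / 2.
Proof. intros _. unfold hh. rewrite plus_INR. simpl. field. pose proof (pos_INR k); lra. Qed.
Lemma ang_B2 k : INR (2*(k+1)) * (2 * hh k) = PI.
Proof. unfold hh. rewrite mult_INR, plus_INR. simpl. field. pose proof (pos_INR k); lra. Qed.
Lemma ang_B3 k : INR (3*(k+1)) * (2 * hh k) = PI + PI / 2.
Proof. unfold hh. rewrite mult_INR, plus_INR. simpl. field. pose proof (pos_INR k); lra. Qed.

Lemma sin_3PI2 : sin (PI + PI/2) = -1.
Proof. rewrite sin_plus, sin_PI, cos_PI, sin_PI2, cos_PI2. ring. Qed.
Lemma cos_3PI2 : cos (PI + PI/2) = 0.
Proof. rewrite cos_plus, sin_PI, cos_PI, sin_PI2, cos_PI2. ring. Qed.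

Lemma dotF k e v : (1 <= k)%nat ->
  dot v (dir (INR (iF k e) * (2 * hh k))) = par e v /\ Rabs (dot v (Bp (INR (iF k e) * (2 * hh k)))) = Rabs (lat e v).
Proof.
  intros Hk. destruct e; unfold iF; [|rewrite ang_F by exact Hk]; unfold dot, dir, Bp, par, lat; simpl.
  - rewrite Rmult_0_l, sin_0, cos_0. split; [ring|]. f_equal; ring.
  - rewrite sin_PI2, cos_PI2. split; [ring|].
    replace (fst v * 0 + snd v * - (1)) with (- snd v) by ring. apply Rabs_Ropp.
Qed.

Lemma dotB k e v :
  dot v (dir (INR (iB k e) * (2 * hh k))) = - par e v /\ Rabs (dot v (Bp (INR (iB k e) * (2 * hh k)))) = Rabs (lat e v).
Proof.
  destruct e; unfold iB; [rewrite ang_B2| rewrite ang_B3]; unfold dot, dir, Bp, par, lat; simpl.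
  - rewrite sin_PI, cos_PI. split; [ring|].
    replace (fst v * -1 + snd v * - 0) with (- fst v) by ring. apply Rabs_Ropp.
  - rewrite sin_3PI2, cos_3PI2. split; [ring|]. f_equal; ring.
Qed.

Lemma in_cone_F k e x p : (1 <= k)%nat ->
  in_cone (4*k+4) x (iF k e) p <->
  (p <> x /\ 0 < par e (vsub p x) /\ cos (hh k) * Rabs (lat e (vsub p x)) < sin (hh k) * par e (vsub p x)).
Proof.
  intros Hk. destruct (get_trig_facts k Hk) as [_ _ Hcs Hs Hsc _ _ _ _ _ _ _ _ _ _ _ _].
  rewrite in_cone_unf. destruct (dotF k e (vsub p x) Hk) as [E1 E2].
  rewrite (cone_iff (cos (hh k)) (sin (hh k)) _ _ (nrm (vsub p x)) Hcs ltac:(lra) Hs (nrm_ge0 _) (nrm_sq_decomp _ _)).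
  rewrite E1, E2. split.
  - intros [_ [H1 H2]]. auto.
  - intros [H1 H2]. split; [destruct e; unfold iF; lia|]. auto.
Qed.

Lemma in_cone_B k e x p : (1 <= k)%nat ->
  in_cone (4*k+4) x (iB k e) p <->
  (p <> x /\ 0 < - par e (vsub p x) /\ cos (hh k) * Rabs (lat e (vsub p x)) < sin (hh k) * (- par e (vsub p x))).
Proof.
  intros Hk. destruct (get_trig_facts k Hk) as [_ _ Hcs Hs Hsc _ _ _ _ _ _ _ _ _ _ _ _].
  rewrite in_cone_unf. destruct (dotB k e (vsub p x)) as [E1 E2].
  rewrite (cone_iff (cos (hh k)) (sin (hh k)) _ _ (nrm (vsub p x)) Hcs ltac:(lra) Hs (nrm_ge0 _) (nrm_sq_decomp _ _)).
  rewrite E1, E2. split.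
  - intros [_ [H1 H2]]. auto.
  - intros [H1 H2]. split; [destruct e; unfold iB; lia|]. auto.
Qed.

Lemma proj_F k e x p : (1 <= k)%nat -> proj (4*k+4) x (iF k e) p = par e (vsub p x).
Proof.
  intros Hk. unfold proj, bisector. rewrite theta_hh. apply (dotF k e (vsub p x) Hk).
Qed.

Lemma proj_B k e x p : proj (4*k+4) x (iB k e) p = - par e (vsub p x).
Proof. unfold proj, bisector. rewrite theta_hh. apply (dotB k e (vsub p x)). Qed.

Lemma cos_le_mid (T x : R) : 0 < T <= PI -> T <= x <= 2 * PI - T -> cos x <= cos T.
Proof.
  intros HT Hx. pose proof PI_RGT_0.
  destruct (Rle_dec x PI) as [Hl|Hl].
  - destruct (Req_dec x T) as [E|Ne]; [subst; lra|]. left. apply cos_decreasing_1; lra.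
  - replace x with (2 * PI - (2 * PI - x)) by ring. rewrite cos_minus, cos_2PI, sin_2PI.
    replace (1 * cos (2 * PI - x) + 0 * sin (2 * PI - x)) with (cos (2 * PI - x)) by ring.
    destruct (Req_dec (2*PI - x) T) as [E|Ne]; [rewrite E; lra|]. left. apply cos_decreasing_1; lra.
Qed.

Lemma cauchy_schwarz (v b : point) : dot v b * dot v b <= (fst v^2 + snd v^2) * (fst b^2 + snd b^2).
Proof.
  unfold dot. pose proof (pow2_ge_0 (fst v * snd b - snd v * fst b)).
  replace ((fst v ^ 2 + snd v ^ 2) * (fst b ^ 2 + snd b ^ 2)) with
    ((fst v * fst b + snd v * snd b) * (fst v * fst b + snd v * snd b) + (fst v * snd b - snd v * fst b) ^ 2) by ring.
  lra.
Qed.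

Lemma cone_disj k x i j p : (1 <= k)%nat ->
  in_cone (4*k+4) x i p -> in_cone (4*k+4) x j p -> i = j.
Proof.
  intros Hk Hi Hj.
  destruct (get_trig_facts k Hk) as [Eco Es Hcs Hs Hsc EcT _ HcT _ _ _ _ _ Ec2 _ _ _].
  apply in_cone_unf in Hi. apply in_cone_unf in Hj.
  destruct Hi as [Hi [Hne Hdi]]. destruct Hj as [Hj [_ Hdj]].
  destruct (Nat.eq_dec i j) as [E|Ne]; [exact E|exfalso].
  set (h := hh k) in *. set (v := vsub p x) in *.
  set (bi := dir (INR i * (2 * h))). set (bj := dir (INR j * (2 * h))).
  set (b := (fst bi + fst bj, snd bi + snd bj) : point).
  assert (Hdb : dot v b = dot v bi + dot v bj) by (unfold dot, b; simpl; ring).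
  assert (Hb2 : fst b ^2 + snd b^2 = 2 + 2 * cos (INR i * (2*h) - INR j * (2*h))).
  { unfold b, bi, bj, dir; simpl. rewrite cos_minus.
    pose proof (sin2_cos2 (INR i * (2*h))) as X1. pose proof (sin2_cos2 (INR j * (2*h))) as X2.
    unfold Rsqr in X1, X2. nra. }
  assert (Hcos : cos (INR i * (2*h) - INR j * (2*h)) <= cos (2*h)).
  { destruct (hh_bounds k Hk) as [Hh0 Hh4]. fold h in Hh0, Hh4.
    assert (HM : INR (4*k+4) * (2*h) = 2 * PI).
    { rewrite INR_m. unfold h, hh. field. pose proof (pos_INR k); lra. }
    assert (Hi' : INR i + 1 <= INR (4*k+4)) by (rewrite <- S_INR; apply le_INR; lia).
    assert (Hj' : INR j + 1 <= INR (4*k+4)) by (rewrite <- S_INR; apply le_INR; lia).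
    destruct (Nat.lt_ge_cases i j) as [Hl|Hl].
    - rewrite <- cos_neg. replace (- (INR i * (2 * h) - INR j * (2 * h))) with ((INR j - INR i) * (2 * h)) by ring.
      assert (1 <= INR j - INR i) by (rewrite <- minus_INR by lia; apply (le_INR 1); lia).
      apply cos_le_mid; [lra|]. pose proof (pos_INR i). nra.
    - replace (INR i * (2 * h) - INR j * (2 * h)) with ((INR i - INR j) * (2 * h)) by ring.
      assert (1 <= INR i - INR j) by (rewrite <- minus_INR by lia; apply (le_INR 1); lia).
      apply cos_le_mid; [lra|]. pose proof (pos_INR j). nra. }

  pose proof (cauchy_schwarz v b) as CS. rewrite Hdb, Hb2 in CS.
  pose proof (nrm_sq v) as Hn. pose proof (nrm_ge0 v) as Hr.
  set (r := nrm v) in *. set (co := cos h) in *.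
  assert (Hsum : dot v bi + dot v bj > 2 * r * co) by (unfold bi, bj; lra).
  assert (Hco : 0 < co) by lra.
  assert (0 <= 2 * r * co) by nra.
  assert ((dot v bi + dot v bj) * (dot v bi + dot v bj) > (2*r*co) * (2*r*co)) by nra.
  rewrite EcT in Hcos.
  assert (r * r * (2 + 2 * cos (INR i * (2 * h) - INR j * (2 * h))) <= r * r * (4 * (co*co))).
  { apply Rmult_le_compat_l; [nra|]. nra. }
  rewrite <- Hn in CS. nra.
Qed.


Definition co_ k := cos (hh k).
Definition s_ k := sin (hh k).
Definition t_ k := s_ k / co_ k.
Definition g_ k := 2 * s_ k * co_ k.
Definition rho_ k := 2 / t_ k.

Record pfacts (co s t g rho cT : R) : Prop := {
  pf_cs : co * co + s * s = 1; pf_s : 0 < s; pf_sc : s < co; pf_co : 0 < co;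
  pf_s2 : 4 * (s * s) < 1;
  pf_t : t = s / co; pf_tpos : 0 < t; pf_t1 : t < 1;
  pf_g : g = 2 * s * co; pf_gpos : 0 < g; pf_g1 : g < 1; pf_tg : t < g;
  pf_2tg : 2 * t * g < 1; pf_gt : g * (1 + t * t) = 2 * t;
  pf_rho : rho * t = 2; pf_rho1 : 1 < rho;
  pf_cT : cT = co * co - s * s; pf_cTpos : 0 < cT;
  pf_cst : co - s * t = cT / co }.

Lemma get_pfacts k : (1 <= k)%nat ->
  pfacts (co_ k) (s_ k) (t_ k) (g_ k) (rho_ k) (cos (2 * hh k)).
Proof.
  intros Hk.
  destruct (get_trig_facts k Hk) as [_ _ Hcs Hs Hsc EcT _ HcT _ _ _ _ _ _ _ _ _].
  destruct (hh_bounds k Hk) as [Hh0 Hh4].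
  pose proof PI_4.
  assert (Hsh : sin (hh k) < hh k) by (apply sin_lt_x; lra).
  unfold co_, s_, t_, g_, rho_.
  set (co := cos (hh k)) in *. set (s := sin (hh k)) in *.
  assert (Hco : 0 < co) by lra.
  assert (Hs12 : s < 1/2) by lra.
  assert (Ht : 0 < s / co) by (apply Rdiv_lt_0_compat; lra).
  assert (Ht1 : s / co < 1) by (apply Rmult_lt_reg_r with co; [lra|]; unfold Rdiv; rewrite Rmult_assoc, Rinv_l by lra; lra).
  constructor; unfold t_, g_, rho_, co_, s_; fold co; fold s; try reflexivity; try lra; try nra.
  - apply Rmult_lt_reg_r with co; [lra|]. unfold Rdiv. rewrite Rmult_assoc, Rinv_l by lra. nra.
  - replace (2 * (s / co) * (2 * s * co)) with (4 * (s * s)) by (field; lra). nra.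
  - replace (2 * s * co * (1 + s / co * (s / co))) with (2 * s * (co * co + s * s) / co) by (field; lra).
    rewrite Hcs. field. lra.
  - field. split; lra.
  - replace (2 / (s / co)) with (2 * co / s) by (field; lra).
    apply Rmult_lt_reg_r with s; [lra|]. unfold Rdiv. rewrite Rmult_assoc, Rinv_l by lra. lra.
  - rewrite EcT. field. lra.
Qed.


Definition SS k (j : nat) : R := g_ k ^ j.
Definition eps_ k (N : nat) : R := t_ k / 4 * (g_ k / rho_ k) ^ (2 * N + 2).
Definition mm k N (j : nat) : R := eps_ k N * rho_ k ^ j.
Definition aa k N j : R := t_ k * SS k j - mm k N j.
Definition Zb k N j : point :=
  if Nat.even j then (- aa k N j, - SS k j) else (- SS k j, - aa k N j).
Definition Qb k N (idx : nat) : point :=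
  match idx with O => (0, 0) | S j => Zb k N j end.

Definition cc (idx : nat) : R := INR idx + 1.
Definition Pt (Q : nat -> point) (d : R) (idx : nat) : point :=
  (fst (Q idx) + d * cc idx + d ^ 3 * cc idx, snd (Q idx) + d * (cc idx) ^ 2).

Definition Lin (Q : nat -> point) (d : R) (e : bool) (i1 i2 : nat) (al be : R) : R :=
  al * (par e (Pt Q d i1) - par e (Pt Q d i2)) + be * (lat e (Pt Q d i1) - lat e (Pt Q d i2)).

Definition Lin0 (Q : nat -> point) (e : bool) (i1 i2 : nat) (al be : R) : R :=
  al * (par e (Q i1) - par e (Q i2)) + be * (lat e (Q i1) - lat e (Q i2)).

Lemma lin_stable Q e i1 i2 al be C : Lin0 Q e i1 i2 al be > C ->
  ev (fun d => Lin Q d e i1 i2 al be > C).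
Proof.
  intros H.
  destruct e.
  - eapply ev_impl.
    + apply (poly4_pos (Lin0 Q true i1 i2 al be - C)
        (al * (cc i1 ^ 2 - cc i2 ^ 2) + be * (cc i1 - cc i2)) 0 (be * (cc i1 - cc i2)) 0). lra.
    + intros d _ Hp. unfold poly4, Lin, Lin0, Pt, par, lat in *; simpl in *. nra.
  - eapply ev_impl.
    + apply (poly4_pos (Lin0 Q false i1 i2 al be - C)
        (al * (cc i1 - cc i2) + be * (cc i1 ^ 2 - cc i2 ^ 2)) 0 (al * (cc i1 - cc i2)) 0). lra.
    + intros d _ Hp. unfold poly4, Lin, Lin0, Pt, par, lat in *; simpl in *. nra.
Qed.

Definition pZ k N (e : bool) (j : nat) : R := if Bool.eqb (Nat.even j) e then - SS k j else - aa k N j.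
Definition lZ k N (e : bool) (j : nat) : R := if Bool.eqb (Nat.even j) e then - aa k N j else - SS k j.

Lemma par_Zb k N e j : par e (Zb k N j) = pZ k N e j.
Proof. unfold par, Zb, pZ. destruct (Nat.even j), e; reflexivity. Qed.
Lemma lat_Zb k N e j : lat e (Zb k N j) = lZ k N e j.
Proof. unfold lat, Zb, lZ. destruct (Nat.even j), e; reflexivity. Qed.


Ltac pf k Hk := destruct (get_pfacts k Hk) as [Pcs Ps Psc Pco Ps2 Ptd Ptpos Pt1 Pg Pgpos Pg1 Ptg P2tg Pgt Prho Prho1 PcT PcTpos Pcst].

Lemma pow_lt_mono_dec (x : R) (i j : nat) : 0 < x < 1 -> (i < j)%nat -> x ^ j < x ^ i.
Proof.
  intros Hx Hij. replace j with (i + (j - i))%nat by lia. rewrite pow_add.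
  assert (0 < x ^ i) by (apply pow_lt; lra).
  assert (x ^ (j - i) < 1) by (apply pow_lt_1_compat; [lra| lia]).
  nra.
Qed.

Lemma pow_lt_mono_inc (x : R) (i j : nat) : 1 < x -> (i < j)%nat -> x ^ i < x ^ j.
Proof. intros Hx Hij. apply Rlt_pow; assumption. Qed.

Lemma SS_pos k j : (1 <= k)%nat -> 0 < SS k j.
Proof. intros Hk. pf k Hk. unfold SS. apply pow_lt; lra. Qed.

Lemma SS_succ k j : SS k (S j) = g_ k * SS k j.
Proof. reflexivity. Qed.

Lemma SS_dec k i j : (1 <= k)%nat -> (i < j)%nat -> SS k j < SS k i.
Proof. intros Hk Hij. pf k Hk. unfold SS. apply pow_lt_mono_dec; [lra| exact Hij]. Qed.

Lemma eps_pos k N : (1 <= k)%nat -> 0 < eps_ k N.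
Proof.
  intros Hk. pf k Hk. unfold eps_.
  apply Rmult_lt_0_compat; [lra|]. apply pow_lt. apply Rdiv_lt_0_compat; lra.
Qed.

Lemma mm_pos k N j : (1 <= k)%nat -> 0 < mm k N j.
Proof. intros Hk. pf k Hk. unfold mm. apply Rmult_lt_0_compat; [apply eps_pos; exact Hk| apply pow_lt; lra]. Qed.

Lemma mm_succ k N j : (1 <= k)%nat -> mm k N j < t_ k * mm k N (S j).
Proof.
  intros Hk. pose proof (mm_pos k N j Hk). pf k Hk.
  unfold mm in *. simpl. replace (t_ k * (eps_ k N * (rho_ k * rho_ k ^ j))) with ((rho_ k * t_ k) * (eps_ k N * rho_ k ^ j)) by ring.
  rewrite Prho. lra.
Qed.

Lemma mm_inc k N i j : (1 <= k)%nat -> (i < j)%nat -> mm k N i < mm k N j.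
Proof.
  intros Hk Hij. pf k Hk. unfold mm.
  apply Rmult_lt_compat_l; [apply eps_pos; exact Hk|]. apply pow_lt_mono_inc; assumption.
Qed.

Lemma mm_small k N j : (1 <= k)%nat -> (j <= 2 * N + 2)%nat -> mm k N j <= t_ k * SS k j / 4.
Proof.
  intros Hk Hj. pf k Hk. unfold mm, eps_, SS.
  set (L := (2 * N + 2)%nat).
  assert (E1 : (g_ k / rho_ k) ^ L = (g_ k / rho_ k) ^ (L - j) * (g_ k / rho_ k) ^ j)
    by (rewrite <- pow_add; f_equal; unfold L; lia).
  assert (E2 : (g_ k / rho_ k) ^ j * rho_ k ^ j = g_ k ^ j)
    by (rewrite <- Rpow_mult_distr; f_equal; field; lra).
  rewrite E1.
  replace (t_ k / 4 * ((g_ k / rho_ k) ^ (L - j) * (g_ k / rho_ k) ^ j) * rho_ k ^ j)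
    with (t_ k / 4 * (g_ k / rho_ k) ^ (L - j) * ((g_ k / rho_ k) ^ j * rho_ k ^ j)) by ring.
  rewrite E2.
  assert (H1 : 0 < g_ k / rho_ k) by (apply Rdiv_lt_0_compat; lra).
  assert (H2 : g_ k / rho_ k < 1).
  { apply Rmult_lt_reg_r with (rho_ k); [lra|]. unfold Rdiv. rewrite Rmult_assoc, Rinv_l by lra. lra. }
  assert (H3 : (g_ k / rho_ k) ^ (L - j) <= 1).
  { destruct (L - j)%nat eqn:Ez; [simpl; lra|]. left. apply pow_lt_1_compat; [lra| lia]. }
  assert (H4 : 0 < g_ k ^ j) by (apply pow_lt; lra).
  assert (H5 : 0 <= (g_ k / rho_ k) ^ (L - j)) by (apply pow_le; lra).
  assert (t_ k / 4 * (g_ k / rho_ k) ^ (L - j) * g_ k ^ j <= t_ k / 4 * 1 * g_ k ^ j).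
  { apply Rmult_le_compat_r; [lra|]. apply Rmult_le_compat_l; lra. }
  lra.
Qed.

Lemma aa_bounds k N j : (1 <= k)%nat -> (j <= 2 * N + 2)%nat -> 0 < aa k N j < t_ k * SS k j.
Proof.
  intros Hk Hj. pose proof (mm_small k N j Hk Hj). pose proof (mm_pos k N j Hk).
  pose proof (SS_pos k j Hk). pf k Hk. unfold aa.
  assert (0 < t_ k * SS k j) by (apply Rmult_lt_0_compat; lra). lra.
Qed.

Lemma aa_dec k N i j : (1 <= k)%nat -> (i < j)%nat -> aa k N j < aa k N i.
Proof.
  intros Hk Hij. pose proof (SS_dec k i j Hk Hij). pose proof (mm_inc k N i j Hk Hij).
  pf k Hk. unfold aa.
  assert (t_ k * SS k j < t_ k * SS k i) by (apply Rmult_lt_compat_l; lra). lra.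
Qed.


Lemma Lin0_SS k N e i j al be :
  Lin0 (Qb k N) e (S i) (S j) al be = al * (pZ k N e i - pZ k N e j) + be * (lZ k N e i - lZ k N e j).
Proof. unfold Lin0. change (Qb k N (S i)) with (Zb k N i). change (Qb k N (S j)) with (Zb k N j). rewrite !par_Zb, !lat_Zb. reflexivity. Qed.

Lemma Lin0_0S k N e j al be :
  Lin0 (Qb k N) e 0 (S j) al be = al * (0 - pZ k N e j) + be * (0 - lZ k N e j).
Proof. unfold Lin0. change (Qb k N (S j)) with (Zb k N j). rewrite par_Zb, lat_Zb. destruct e; reflexivity. Qed.

Lemma eqb_same k : Bool.eqb (Nat.even k) (Nat.even k) = true.
Proof. destruct (Nat.even k); reflexivity. Qed.
Lemma eqb_S k : Bool.eqb (Nat.even (S k)) (Nat.even k) = false.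
Proof. rewrite Nat.even_succ, <- Nat.negb_even. destruct (Nat.even k); reflexivity. Qed.
Lemma eqb_SS k : Bool.eqb (Nat.even (S (S k))) (Nat.even k) = true.
Proof. rewrite Nat.even_succ, Nat.odd_succ. apply eqb_same. Qed.

Lemma pZ_same k N e j : Bool.eqb (Nat.even j) e = true -> pZ k N e j = - SS k j /\ lZ k N e j = - aa k N j.
Proof. unfold pZ, lZ. intros H; rewrite H; split; reflexivity. Qed.
Lemma pZ_diff k N e j : Bool.eqb (Nat.even j) e = false -> pZ k N e j = - aa k N j /\ lZ k N e j = - SS k j.
Proof. unfold pZ, lZ. intros H; rewrite H; split; reflexivity. Qed.

Lemma co_s_t k : (1 <= k)%nat -> s_ k = t_ k * co_ k.
Proof. intros Hk. pf k Hk. rewrite Ptd. field. lra. Qed.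

Lemma BF1 k N n : (1 <= k)%nat -> (n <= 2 * N + 1)%nat ->
  Lin0 (Qb k N) (Nat.even n) 0 (S n) (s_ k) (- co_ k) > 0 /\ Lin0 (Qb k N) (Nat.even n) 0 (S n) (s_ k) (co_ k) > 0.
Proof.
  intros Hk Hkn. pose proof (co_s_t k Hk) as Est. pf k Hk.
  rewrite !Lin0_0S. destruct (pZ_same k N (Nat.even n) n (eqb_same n)) as [E1 E2]. rewrite E1, E2.
  pose proof (mm_pos k N n Hk). pose proof (aa_bounds k N n Hk ltac:(lia)). pose proof (SS_pos k n Hk).
  unfold aa in *. rewrite Est. split; nra.
Qed.

Lemma BF2 k N n : (1 <= k)%nat -> (n + 1 <= 2 * N + 1)%nat ->
  Lin0 (Qb k N) (Nat.even n) (S (S n)) (S n) (s_ k) (co_ k) > 0 /\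
  Lin0 (Qb k N) (Nat.even n) (S (S n)) (S n) (s_ k) (- co_ k) > 0.
Proof.
  intros Hk Hkn. pose proof (co_s_t k Hk) as Est. pose proof (mm_succ k N n Hk) as Hms.
  pose proof (aa_bounds k N n Hk ltac:(lia)) as Ha0. pose proof (aa_bounds k N (S n) Hk ltac:(lia)) as Ha1.
  pose proof (SS_pos k n Hk) as HS. pose proof (SS_succ k n) as ESS.
  pf k Hk.
  rewrite !Lin0_SS. destruct (pZ_same k N (Nat.even n) n (eqb_same n)) as [E1 E2].
  destruct (pZ_diff k N (Nat.even n) (S n) (eqb_S n)) as [E3 E4]. rewrite E1, E2, E3, E4.
  rewrite Est.
  unfold aa in *. rewrite ESS in *.
  split.
  - assert (Hk1 : t_ k * (SS k n - (t_ k * (g_ k * SS k n) - mm k N (S n))) + (t_ k * SS k n - mm k N n) - g_ k * SS k n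
                 = t_ k * mm k N (S n) - mm k N n).
    { replace (t_ k * (SS k n - (t_ k * (g_ k * SS k n) - mm k N (S n))) + (t_ k * SS k n - mm k N n) - g_ k * SS k n)
        with (SS k n * (2 * t_ k - g_ k * (1 + t_ k * t_ k)) + t_ k * mm k N (S n) - mm k N n) by ring.
      rewrite Pgt. ring. }
    assert (0 < co_ k * (t_ k * mm k N (S n) - mm k N n)) by (apply Rmult_lt_0_compat; lra).
    nra.
  - assert (t_ k * SS k n < g_ k * SS k n) by (apply Rmult_lt_compat_r; lra).
    assert (Htg : t_ k * (g_ k * SS k n) < SS k n).
    { replace (t_ k * (g_ k * SS k n)) with ((t_ k * g_ k) * SS k n) by ring.
      assert (t_ k * g_ k < 1) by lra.
      assert ((t_ k * g_ k) * SS k n < 1 * SS k n) by (apply Rmult_lt_compat_r; lra). lra. }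
    assert (0 < t_ k * (SS k n - (t_ k * (g_ k * SS k n) - mm k N (S n)))) by (apply Rmult_lt_0_compat; lra).
    assert (0 < co_ k * (t_ k * (SS k n - (t_ k * (g_ k * SS k n) - mm k N (S n))) - (t_ k * SS k n - mm k N n) + g_ k * SS k n))
      by (apply Rmult_lt_0_compat; lra).
    nra.
Qed.

Lemma BF3 k N n : (1 <= k)%nat -> (n + 1 <= 2 * N + 1)%nat ->
  Lin0 (Qb k N) (Nat.even n) 0 (S (S n)) 1 0 > 0.
Proof.
  intros Hk Hkn. rewrite Lin0_0S. destruct (pZ_diff k N (Nat.even n) (S n) (eqb_S n)) as [E3 E4]. rewrite E3.
  pose proof (aa_bounds k N (S n) Hk ltac:(lia)). lra.
Qed.

Lemma BF4 k N n : (1 <= k)%nat -> (n + 2 <= 2 * N + 1)%nat ->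
  Lin0 (Qb k N) (Nat.even n) 0 (S (S (S n))) (s_ k) (co_ k) > 0 /\
  Lin0 (Qb k N) (Nat.even n) 0 (S (S (S n))) (s_ k) (- co_ k) > 0.
Proof.
  intros Hk Hkn. pose proof (co_s_t k Hk) as Est.
  rewrite !Lin0_0S. destruct (pZ_same k N (Nat.even n) (S (S n)) (eqb_SS n)) as [E1 E2]. rewrite E1, E2.
  pose proof (aa_bounds k N (S (S n)) Hk ltac:(lia)). pose proof (SS_pos k (S (S n)) Hk).
  pose proof (mm_pos k N (S (S n)) Hk). pf k Hk. unfold aa in *. rewrite Est.
  split; nra.
Qed.

Lemma BF5 k N n : (1 <= k)%nat ->
  Lin0 (Qb k N) (Nat.even n) (S (S (S n))) (S n) 1 0 > 0.
Proof.
  intros Hk. rewrite Lin0_SS. destruct (pZ_same k N (Nat.even n) (S (S n)) (eqb_SS n)) as [E1 E2].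
  destruct (pZ_same k N (Nat.even n) n (eqb_same n)) as [E3 E4]. rewrite E1, E3.
  pose proof (SS_dec k n (S (S n)) Hk ltac:(lia)). lra.
Qed.

Lemma BF6 k N n : (1 <= k)%nat -> (n + 1 <= 2 * N + 1)%nat ->
  Lin0 (Qb k N) (Nat.even n) (S (S n)) (S n) (co_ k) (- s_ k) >= cos (2 * hh k) / co_ k * SS k n.
Proof.
  intros Hk Hkn. pose proof (co_s_t k Hk) as Est.
  pose proof (mm_pos k N n Hk). pose proof (mm_pos k N (S n) Hk). pose proof (SS_succ k n) as ESS.
  rewrite Lin0_SS. destruct (pZ_same k N (Nat.even n) n (eqb_same n)) as [E1 E2].
  destruct (pZ_diff k N (Nat.even n) (S n) (eqb_S n)) as [E3 E4]. rewrite E1, E2, E3, E4.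
  pf k Hk. unfold aa. rewrite ESS.
  assert (E : co_ k * (- (t_ k * (g_ k * SS k n) - mm k N (S n)) - - SS k n) +
     - s_ k * (- (g_ k * SS k n) - - (t_ k * SS k n - mm k N n))
     = SS k n * (co_ k - s_ k * t_ k) + co_ k * mm k N (S n) + s_ k * mm k N n).
  { rewrite Est. ring. }
  rewrite E, Pcst.
  assert (0 < co_ k * mm k N (S n)) by (apply Rmult_lt_0_compat; lra).
  assert (0 < s_ k * mm k N n) by (apply Rmult_lt_0_compat; lra).
  replace (cos (2 * hh k) / co_ k * SS k n) with (SS k n * (cos (2 * hh k) / co_ k)) by ring.
  lra.
Qed.

Lemma BF_same_gt k N n i : (1 <= k)%nat -> Bool.eqb (Nat.even i) (Nat.even n) = true -> (n < i)%nat ->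
  Lin0 (Qb k N) (Nat.even n) (S i) (S n) (- t_ k) 1 > 0.
Proof.
  intros Hk He Hi. rewrite Lin0_SS. destruct (pZ_same k N (Nat.even n) n (eqb_same n)) as [E1 E2].
  destruct (pZ_same k N (Nat.even n) i He) as [E3 E4]. rewrite E1, E2, E3, E4.
  pose proof (mm_inc k N n i Hk Hi). unfold aa. lra.
Qed.

Lemma BF_same_lt k N n i : (1 <= k)%nat -> Bool.eqb (Nat.even i) (Nat.even n) = true -> (i < n)%nat ->
  Lin0 (Qb k N) (Nat.even n) (S n) (S i) 1 0 > 0.
Proof.
  intros Hk He Hi. rewrite Lin0_SS. destruct (pZ_same k N (Nat.even n) n (eqb_same n)) as [E1 E2].
  destruct (pZ_same k N (Nat.even n) i He) as [E3 E4]. rewrite E1, E3.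
  pose proof (SS_dec k i n Hk Hi). lra.
Qed.

Lemma BF_diff_gt k N n i : (1 <= k)%nat -> Bool.eqb (Nat.even i) (Nat.even n) = false -> (S n < i)%nat ->
  Lin0 (Qb k N) (Nat.even n) (S i) (S (S n)) 1 0 > 0.
Proof.
  intros Hk He Hi. rewrite Lin0_SS.
  destruct (pZ_diff k N (Nat.even n) (S n) (eqb_S n)) as [E1 E2].
  destruct (pZ_diff k N (Nat.even n) i He) as [E3 E4]. rewrite E1, E3.
  pose proof (aa_dec k N (S n) i Hk Hi). lra.
Qed.

Lemma BF_diff_lt k N n i : (1 <= k)%nat -> (n <= 2 * N + 1)%nat -> Bool.eqb (Nat.even i) (Nat.even n) = false -> (i < n)%nat ->
  Lin0 (Qb k N) (Nat.even n) (S i) (S n) (- t_ k) (-1) > 0.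
Proof.
  intros Hk Hkn He Hi. rewrite Lin0_SS. destruct (pZ_same k N (Nat.even n) n (eqb_same n)) as [E1 E2].
  destruct (pZ_diff k N (Nat.even n) i He) as [E3 E4]. rewrite E1, E2, E3, E4.
  pose proof (aa_bounds k N n Hk ltac:(lia)) as Ha. pose proof (aa_bounds k N i Hk ltac:(lia)) as Hai.
  assert (HSk : SS k n = g_ k * SS k (n - 1)).
  { unfold SS. replace (g_ k ^ n) with (g_ k ^ S (n - 1)) by (f_equal; lia). reflexivity. }
  assert (HSi : SS k (n - 1) <= SS k i).
  { destruct (Nat.eq_dec i (n - 1)) as [E|Ne]; [rewrite E; lra|]. left. apply SS_dec; [exact Hk| lia]. }
  pose proof (SS_pos k (n - 1) Hk) as HS1.
  pf k Hk.
  rewrite HSk in *.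
  assert (H1 : t_ k * (g_ k * SS k (n - 1)) * 2 < SS k (n - 1)).
  { replace (t_ k * (g_ k * SS k (n - 1)) * 2) with ((2 * t_ k * g_ k) * SS k (n - 1)) by ring.
    assert ((2 * t_ k * g_ k) * SS k (n - 1) < 1 * SS k (n - 1)) by (apply Rmult_lt_compat_r; lra). lra. }
  assert (0 < t_ k * aa k N i) by (apply Rmult_lt_0_compat; lra).
  lra.
Qed.


Lemma neq_of_par (e : bool) (p x : point) : par e p - par e x <> 0 -> p <> x.
Proof. intros H E. subst. apply H. ring. Qed.

Lemma abs_lt_of_two (c L P : R) : 0 < c -> P - c * L > 0 -> P + c * L > 0 -> c * Rabs L < P.
Proof. intros Hc H1 H2. unfold Rabs; destruct (Rcase_abs L); nra. Qed.

Lemma cone_fwd_of_Lin k Q d e a b : (1 <= k)%nat ->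
  Lin Q d e a b (s_ k) (- co_ k) > 0 -> Lin Q d e a b (s_ k) (co_ k) > 0 ->
  in_cone (4*k+4) (Pt Q d b) (iF k e) (Pt Q d a).
Proof.
  intros Hk H1 H2. pf k Hk. unfold Lin in *. apply in_cone_F; [exact Hk|].
  rewrite par_sub, lat_sub. change (cos (hh k)) with (co_ k). change (sin (hh k)) with (s_ k).
  assert (Hp : 0 < par e (Pt Q d a) - par e (Pt Q d b)).
  { assert (0 < s_ k * (par e (Pt Q d a) - par e (Pt Q d b))) by lra.
    apply (Rmult_lt_reg_l (s_ k)); [lra|]. lra. }
  split; [apply (neq_of_par e); lra|]. split; [exact Hp|].
  apply abs_lt_of_two; [lra| lra| lra].
Qed.

Lemma cone_bwd_of_Lin k Q d e a b : (1 <= k)%nat ->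
  Lin Q d e b a (s_ k) (- co_ k) > 0 -> Lin Q d e b a (s_ k) (co_ k) > 0 ->
  in_cone (4*k+4) (Pt Q d b) (iB k e) (Pt Q d a).
Proof.
  intros Hk H1 H2. pf k Hk. unfold Lin in *. apply in_cone_B; [exact Hk|].
  rewrite par_sub, lat_sub. change (cos (hh k)) with (co_ k). change (sin (hh k)) with (s_ k).
  assert (Hp : 0 < par e (Pt Q d b) - par e (Pt Q d a)).
  { assert (0 < s_ k * (par e (Pt Q d b) - par e (Pt Q d a))) by lra.
    apply (Rmult_lt_reg_l (s_ k)); [lra|]. lra. }
  split; [apply (neq_of_par e); lra|]. split; [lra|].
  rewrite <- Rabs_Ropp. replace (- (lat e (Pt Q d a) - lat e (Pt Q d b))) with (lat e (Pt Q d b) - lat e (Pt Q d a)) by ring.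
  replace (- (par e (Pt Q d a) - par e (Pt Q d b))) with (par e (Pt Q d b) - par e (Pt Q d a)) by ring.
  apply abs_lt_of_two; [lra| lra| lra].
Qed.


Lemma in_cone_F' k e x p : (1 <= k)%nat -> in_cone (4*k+4) x (iF k e) p ->
  p <> x /\ 0 < par e p - par e x /\ co_ k * Rabs (lat e p - lat e x) < s_ k * (par e p - par e x).
Proof. intros Hk H. apply in_cone_F in H; [|exact Hk]. rewrite par_sub, lat_sub in H. exact H. Qed.

Lemma proj_F' k e x p : (1 <= k)%nat -> proj (4*k+4) x (iF k e) p = par e p - par e x.
Proof. intros Hk. rewrite proj_F by exact Hk. apply par_sub. Qed.

Lemma proj_B' k e x p : proj (4*k+4) x (iB k e) p = - (par e p - par e x).
Proof. rewrite proj_B. rewrite par_sub. reflexivity. Qed.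

Lemma ev_F3 k N n j : (1 <= k)%nat -> (n + 2 <= 2 * N + 1)%nat -> (j < 2 * N + 3)%nat ->
  ev (fun d => in_cone (4*k+4) (Pt (Qb k N) d (S n)) (iF k (Nat.even n)) (Pt (Qb k N) d j) ->
        proj (4*k+4) (Pt (Qb k N) d (S n)) (iF k (Nat.even n)) (Pt (Qb k N) d (S (S n))) <=
        proj (4*k+4) (Pt (Qb k N) d (S n)) (iF k (Nat.even n)) (Pt (Qb k N) d j)).
Proof.
  intros Hk Hn Hj.
  pose proof (co_s_t k Hk) as Est.
  set (Q := Qb k N). set (e := Nat.even n).
  destruct j as [|i].
  - eapply ev_impl; [apply lin_stable; apply (BF3 k N n Hk ltac:(lia))|].
    intros d _ HL _. rewrite !proj_F' by exact Hk. unfold Lin in HL. fold Q e in HL. lra.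
  - destruct (Nat.eq_dec i n) as [Ein|Nin].
    { subst i. exists 1. split; [lra|]. intros d _ Hc. apply in_cone_F' in Hc; [|exact Hk]. tauto. }
    destruct (Nat.eq_dec i (S n)) as [Ein'|Nin'].
    { subst i. exists 1. split; [lra|]. intros d _ _. lra. }
    destruct (Bool.eqb (Nat.even i) e) eqn:Epar; destruct (Nat.lt_ge_cases n i) as [Hlt|Hge].
    +
      eapply ev_impl; [apply lin_stable; apply (BF_same_gt k N n i Hk Epar Hlt)|].
      intros d _ HL Hc. exfalso. apply in_cone_F' in Hc; [|exact Hk]. destruct Hc as [_ [Hp Hl]].
      unfold Lin in HL. fold Q e in HL. pf k Hk.
      set (dp := par e (Pt Q d (S i)) - par e (Pt Q d (S n))) in *.
      set (dl := lat e (Pt Q d (S i)) - lat e (Pt Q d (S n))) in *.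
      assert (dl > t_ k * dp) by lra.
      assert (co_ k * dl > s_ k * dp) by (rewrite Est; nra).
      assert (dl <= Rabs dl) by apply RRle_abs. nra.
    +
      eapply ev_impl; [apply lin_stable; apply (BF_same_lt k N n i Hk Epar ltac:(lia))|].
      intros d _ HL Hc. exfalso. apply in_cone_F' in Hc; [|exact Hk]. destruct Hc as [_ [Hp Hl]].
      unfold Lin in HL. fold Q e in HL. lra.
    +
      eapply ev_impl; [apply lin_stable; apply (BF_diff_gt k N n i Hk Epar ltac:(lia))|].
      intros d _ HL _. rewrite !proj_F' by exact Hk. unfold Lin in HL. fold Q e in HL. lra.
    +
      eapply ev_impl; [apply lin_stable; apply (BF_diff_lt k N n i Hk ltac:(lia) Epar ltac:(lia))|].
      intros d _ HL Hc. exfalso. apply in_cone_F' in Hc; [|exact Hk]. destruct Hc as [_ [Hp Hl]].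
      unfold Lin in HL. fold Q e in HL. pf k Hk.
      set (dp := par e (Pt Q d (S i)) - par e (Pt Q d (S n))) in *.
      set (dl := lat e (Pt Q d (S i)) - lat e (Pt Q d (S n))) in *.
      assert (- dl > t_ k * dp) by lra.
      assert (co_ k * (- dl) > s_ k * dp) by (rewrite Est; nra).
      assert (- dl <= Rabs dl) by (rewrite <- Rabs_Ropp; apply RRle_abs). nra.
Qed.


Lemma pdist_lb (co s : R) (e : bool) (x y : point) : co * co + s * s = 1 ->
  co * (par e y - par e x) - s * (lat e y - lat e x) <= pdist x y.
Proof.
  intros Hcs. unfold pdist.
  set (a := par e y - par e x). set (b := lat e y - lat e x).
  assert (E : (fst y - fst x) ^ 2 + (snd y - snd x) ^ 2 = a * a + b * b) by (unfold a, b; destruct e; simpl; ring).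
  rewrite E.
  destruct (Rle_dec (co * a - s * b) 0) as [Hn|Hp]; [pose proof (sqrt_pos (a*a+b*b)); lra|].
  apply sq_le_sqrt; [lra|].
  pose proof (pow2_ge_0 (co * b + s * a)).
  replace (a * a + b * b) with ((co * co + s * s) * (a * a + b * b)) by (rewrite Hcs; ring).
  nra.
Qed.

Definition StepOK k N (tau d : R) (n : nat) : Prop :=
  let P := Pt (Qb k N) d in let e := Nat.even n in
  in_cone (4*k+4) (P (S n)) (iF k e) (P O) /\
  in_cone (4*k+4) (P (S n)) (iF k e) (P (S (S n))) /\
  proj (4*k+4) (P (S n)) (iF k e) (P (S (S n))) < proj (4*k+4) (P (S n)) (iF k e) (P O) /\
  in_cone (4*k+4) (P O) (iB k e) (P (S n)) /\
  in_cone (4*k+4) (P O) (iB k e) (P (S (S (S n)))) /\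
  proj (4*k+4) (P O) (iB k e) (P (S (S (S n)))) < proj (4*k+4) (P O) (iB k e) (P (S n)) /\
  pdist (P (S n)) (P (S (S n))) >= (1 - tau) * (cos (2 * hh k) / co_ k * SS k n) /\
  (forall j, (j < 2 * N + 3)%nat -> in_cone (4*k+4) (P (S n)) (iF k e) (P j) ->
        proj (4*k+4) (P (S n)) (iF k e) (P (S (S n))) <= proj (4*k+4) (P (S n)) (iF k e) (P j)).

Lemma ev_StepOK k N tau n : (1 <= k)%nat -> 0 < tau < 1 -> (n + 2 <= 2 * N + 1)%nat ->
  ev (fun d => StepOK k N tau d n).
Proof.
  intros Hk Htau Hn. unfold StepOK; cbv zeta.
  destruct (BF1 k N n Hk ltac:(lia)) as [B1a B1b].
  destruct (BF2 k N n Hk ltac:(lia)) as [B2a B2b].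
  pose proof (BF3 k N n Hk ltac:(lia)) as B3.
  destruct (BF4 k N n Hk ltac:(lia)) as [B4a B4b].
  pose proof (BF5 k N n Hk) as B5.
  pose proof (BF6 k N n Hk ltac:(lia)) as B6.
  assert (Hpos : 0 < cos (2 * hh k) / co_ k * SS k n).
  { pf k Hk. pose proof (SS_pos k n Hk). apply Rmult_lt_0_compat; [apply Rdiv_lt_0_compat; lra| lra]. }
  assert (B6' : Lin0 (Qb k N) (Nat.even n) (S (S n)) (S n) (co_ k) (- s_ k) > (1 - tau) * (cos (2 * hh k) / co_ k * SS k n)) by nra.
  apply lin_stable in B1a, B1b, B2a, B2b, B3, B4a, B4b, B5, B6'.
  pose proof (ev_forall (2 * N + 3) _ (fun j Hj => ev_F3 k N n j Hk Hn Hj)) as B7.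
  pose proof (ev_and _ _ B1a (ev_and _ _ B1b (ev_and _ _ B2a (ev_and _ _ B2b (ev_and _ _ B3
     (ev_and _ _ B4a (ev_and _ _ B4b (ev_and _ _ B5 (ev_and _ _ B6' B7))))))))) as Hall.
  eapply ev_impl; [exact Hall|]. intros d Hd HH.
  destruct HH as [A1 [A2 [A3 [A4 [A5 [A6 [A7 [A8 [A9 A10]]]]]]]]].
  unfold Lin in A1, A2, A3, A4, A5, A6, A7, A8, A9.
  set (P := Pt (Qb k N) d) in *. set (e := Nat.even n) in *.
  pf k Hk.
  split; [apply cone_fwd_of_Lin; [exact Hk| |]; unfold Lin; fold P; lra|].
  split; [apply cone_fwd_of_Lin; [exact Hk| |]; unfold Lin; fold P; lra|].
  split; [rewrite !proj_F' by exact Hk; lra|].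
  split; [apply cone_bwd_of_Lin; [exact Hk| |]; unfold Lin; fold P; lra|].
  split; [apply cone_bwd_of_Lin; [exact Hk| |]; unfold Lin; fold P; lra|].
  split; [rewrite !proj_B'; lra|].
  split; [|exact A10].
  pose proof (pdist_lb (co_ k) (s_ k) e (P (S n)) (P (S (S n))) Pcs). lra.
Qed.


Lemma cc_diff i j : i <> j -> cc j - cc i <> 0.
Proof.
  intros H E. unfold cc in E. apply H. apply INR_eq. lra.
Qed.

Lemma cc_pos i : 0 < cc i.
Proof. unfold cc. pose proof (pos_INR i). lra. Qed.

Lemma ev_GP_cross (Q : nat -> point) i j b : i <> j ->
  ev (fun d => cross (vsub (Pt Q d j) (Pt Q d i)) (dir b) <> 0).
Proof.
  intros Hij.
  set (Dc := cc j - cc i). set (Dc2 := cc j ^ 2 - cc i ^ 2).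
  assert (HDc : Dc <> 0) by (apply cc_diff; exact Hij).
  assert (HDc2 : Dc2 <> 0).
  { unfold Dc2. replace (cc j ^ 2 - cc i ^ 2) with ((cc j - cc i) * (cc j + cc i)) by ring.
    pose proof (cc_pos i); pose proof (cc_pos j).
    apply Rmult_integral_contrapositive; split; [exact HDc| lra]. }
  eapply ev_impl.
  - apply (poly4_nz' (cross (vsub (Q j) (Q i)) (dir b)) (Dc * cos b - Dc2 * sin b) 0 (Dc * cos b) 0).
    destruct (Req_dec (cos b) 0) as [Ec|Nc].
    + right; left. rewrite Ec. pose proof (sin2_cos2 b) as X. unfold Rsqr in X. rewrite Ec in X.
      assert (sin b <> 0) by (intro Es; rewrite Es in X; lra).
      replace (Dc * 0 - Dc2 * sin b) with (- (Dc2 * sin b)) by ring.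
      apply Ropp_neq_0_compat. apply Rmult_integral_contrapositive; split; assumption.
    + right; right; right. apply Rmult_integral_contrapositive; split; assumption.
  - intros d _ Hp. unfold poly4 in Hp. unfold cross, vsub, Pt, dir in *; cbn [fst snd] in *.
    unfold Dc, Dc2 in Hp.
    replace ((fst (Q j) + d * cc j + d ^ 3 * cc j - (fst (Q i) + d * cc i + d ^ 3 * cc i)) * cos b -
      (snd (Q j) + d * cc j ^ 2 - (snd (Q i) + d * cc i ^ 2)) * sin b) with
     ((fst (Q j) - fst (Q i)) * cos b - (snd (Q j) - snd (Q i)) * sin b + ((cc j - cc i) * cos b - (cc j ^ 2 - cc i ^ 2) * sin b) * d +
      0 * d ^ 2 + (cc j - cc i) * cos b * d ^ 3 + 0 * d ^ 4) by ring.
    exact Hp.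
Qed.

Lemma ev_GP_dot (Q : nat -> point) i j b : i <> j ->
  ev (fun d => dot (vsub (Pt Q d j) (Pt Q d i)) (dir b) <> 0).
Proof.
  intros Hij.
  set (Dc := cc j - cc i). set (Dc2 := cc j ^ 2 - cc i ^ 2).
  assert (HDc : Dc <> 0) by (apply cc_diff; exact Hij).
  assert (HDc2 : Dc2 <> 0).
  { unfold Dc2. replace (cc j ^ 2 - cc i ^ 2) with ((cc j - cc i) * (cc j + cc i)) by ring.
    pose proof (cc_pos i); pose proof (cc_pos j).
    apply Rmult_integral_contrapositive; split; [exact HDc| lra]. }
  eapply ev_impl.
  - apply (poly4_nz' (dot (vsub (Q j) (Q i)) (dir b)) (Dc * sin b + Dc2 * cos b) 0 (Dc * sin b) 0).
    destruct (Req_dec (sin b) 0) as [Es|Ns].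
    + right; left. rewrite Es. pose proof (sin2_cos2 b) as X. unfold Rsqr in X. rewrite Es in X.
      assert (cos b <> 0) by (intro Ec; rewrite Ec in X; lra).
      replace (Dc * 0 + Dc2 * cos b) with (Dc2 * cos b) by ring.
      apply Rmult_integral_contrapositive; split; assumption.
    + right; right; right. apply Rmult_integral_contrapositive; split; assumption.
  - intros d _ Hp. unfold poly4 in Hp. unfold dot, vsub, Pt, dir in *; cbn [fst snd] in *.
    unfold Dc, Dc2 in Hp.
    replace ((fst (Q j) + d * cc j + d ^ 3 * cc j - (fst (Q i) + d * cc i + d ^ 3 * cc i)) * sin b +
      (snd (Q j) + d * cc j ^ 2 - (snd (Q i) + d * cc i ^ 2)) * cos b) with
     ((fst (Q j) - fst (Q i)) * sin b + (snd (Q j) - snd (Q i)) * cos b + ((cc j - cc i) * sin b + (cc j ^ 2 - cc i ^ 2) * cos b) * d +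
      0 * d ^ 2 + (cc j - cc i) * sin b * d ^ 3 + 0 * d ^ 4) by ring.
    exact Hp.
Qed.

Lemma ev_GP_triple (Q : nat -> point) a b c : a <> b -> a <> c -> b <> c ->
  ev (fun d => cross (vsub (Pt Q d b) (Pt Q d a)) (vsub (Pt Q d c) (Pt Q d a)) <> 0).
Proof.
  intros Hab Hac Hbc.
  set (X1 := fst (Q b) - fst (Q a)). set (Y1 := snd (Q b) - snd (Q a)).
  set (X2 := fst (Q c) - fst (Q a)). set (Y2 := snd (Q c) - snd (Q a)).
  set (C1 := cc b - cc a). set (C2 := cc c - cc a).
  set (E1 := cc b ^ 2 - cc a ^ 2). set (E2 := cc c ^ 2 - cc a ^ 2).
  eapply ev_impl.
  - apply (poly4_nz' (X1 * Y2 - Y1 * X2) (X1 * E2 + C1 * Y2 - Y1 * C2 - E1 * X2) (C1 * E2 - E1 * C2)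
           (C1 * Y2 - Y1 * C2) (C1 * E2 - E1 * C2)).
    right; right; left.
    replace (C1 * E2 - E1 * C2) with ((cc b - cc a) * (cc c - cc a) * (cc c - cc b)) by (unfold C1, C2, E1, E2; ring).
    apply Rmult_integral_contrapositive; split; [apply Rmult_integral_contrapositive; split|];
      apply cc_diff; auto.
  - intros d _ Hp. unfold poly4 in Hp. unfold cross, vsub, Pt in *; cbn [fst snd] in *.
    unfold X1, Y1, X2, Y2, C1, C2, E1, E2 in Hp.
    intro HZ. apply Hp. rewrite <- HZ. ring.
Qed.


Definition GPfacts (Q : nat -> point) (m M : nat) (d : R) : Prop :=
  (forall i, (i < M)%nat -> forall j, (j < M)%nat -> i <> j -> forall l, (l < m)%nat ->
     cross (vsub (Pt Q d j) (Pt Q d i)) (dir ((2 * INR l + 1) * theta m / 2)) <> 0 /\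
     dot (vsub (Pt Q d j) (Pt Q d i)) (bisector m l) <> 0) /\
  (forall a, (a < M)%nat -> forall b, (b < M)%nat -> forall c, (c < M)%nat -> a <> b -> a <> c -> b <> c ->
     cross (vsub (Pt Q d b) (Pt Q d a)) (vsub (Pt Q d c) (Pt Q d a)) <> 0).

Lemma ev_trivial (Pr : R -> Prop) : (forall d, Pr d) -> ev Pr.
Proof. intros H. exists 1. split; [lra|]. intros d _. apply H. Qed.

Lemma ev_GPfacts Q m M : ev (GPfacts Q m M).
Proof.
  apply ev_and.
  - apply ev_forall. intros i Hi. apply ev_forall. intros j Hj.
    destruct (Nat.eq_dec i j) as [E|Ne].
    + apply ev_trivial. intros d Hne. contradiction.
    + eapply ev_impl.
      * apply ev_forall. intros l Hl. apply ev_and; [apply ev_GP_cross; exact Ne| apply ev_GP_dot; exact Ne].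
      * intros d _ H _. exact H.
  - apply ev_forall. intros a Ha. apply ev_forall. intros b Hb. apply ev_forall. intros c Hc.
    destruct (Nat.eq_dec a b) as [E1|N1]; [apply ev_trivial; intros d X; exfalso; apply X; assumption|].
    destruct (Nat.eq_dec a c) as [E2|N2]; [apply ev_trivial; intros d _ X; exfalso; apply X; assumption|].
    destruct (Nat.eq_dec b c) as [E3|N3]; [apply ev_trivial; intros d _ _ X; exfalso; apply X; assumption|].
    eapply ev_impl; [apply (ev_GP_triple Q a b c N1 N2 N3)|]. intros d _ H _ _ _. exact H.
Qed.

Lemma in_Pts (Q : nat -> point) d M p : In p (map (Pt Q d) (seq 0 M)) -> exists i, (i < M)%nat /\ p = Pt Q d i.
Proof. intros H. apply in_map_iff in H. destruct H as [i [E Hi]]. apply in_seq in Hi. exists i. split; [lia| auto]. Qed.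

Lemma Pts_in (Q : nat -> point) d M i : (i < M)%nat -> In (Pt Q d i) (map (Pt Q d) (seq 0 M)).
Proof. intros Hi. apply in_map. apply in_seq. lia. Qed.

Lemma GP_of_facts Q m M d : GPfacts Q m M d -> general_position m (map (Pt Q d) (seq 0 M)).
Proof.
  intros [G1 G2]. split; [|split].
  - intros u v j Hu Hv Huv Hj.
    destruct (in_Pts Q d M u Hu) as [i1 [Hi1 E1]]. destruct (in_Pts Q d M v Hv) as [i2 [Hi2 E2]]. subst.
    apply (G1 i1 Hi1 i2 Hi2); [intro E; subst; contradiction| exact Hj].
  - intros u v j Hu Hv Huv Hj.
    destruct (in_Pts Q d M u Hu) as [i1 [Hi1 E1]]. destruct (in_Pts Q d M v Hv) as [i2 [Hi2 E2]]. subst.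
    apply (G1 i1 Hi1 i2 Hi2); [intro E; subst; contradiction| exact Hj].
  - intros u v w Hu Hv Hw Huv Huw Hvw.
    destruct (in_Pts Q d M u Hu) as [i1 [Hi1 E1]]. destruct (in_Pts Q d M v Hv) as [i2 [Hi2 E2]].
    destruct (in_Pts Q d M w Hw) as [i3 [Hi3 E3]]. subst.
    apply G2; auto; intro E; subst; contradiction.
Qed.


Lemma path_length_nonneg l : 0 <= path_length l.
Proof.
  induction l as [|x l IH]; simpl; [lra|].
  destruct l as [|y l']; [lra|]. pose proof (sqrt_pos ((fst y - fst x) ^ 2 + (snd y - snd x) ^ 2)).
  unfold pdist. lra.
Qed.

Definition Bf k N tau (n : nat) : R :=
  (1 - tau) * (cos (2 * hh k) / co_ k) * (g_ k ^ n - g_ k ^ (2 * N)) / (1 - g_ k).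

Lemma chain k N tau d : (1 <= k)%nat -> 0 < tau < 1 ->
  general_position (4*k+4) (map (Pt (Qb k N) d) (seq 0 (2*N+3))) ->
  (forall n, (n < 2 * N)%nat -> StepOK k N tau d n) ->
  forall r n, (n + r = 2 * N)%nat ->
  exists l, routing_path (map (Pt (Qb k N) d) (seq 0 (2*N+3))) (4*k+4) (Pt (Qb k N) d O) (Pt (Qb k N) d (S n)) l /\
    path_length l >= Bf k N tau n.
Proof.
  intros Hk Htau HGP Hsteps.
  set (P := Pt (Qb k N) d) in *. set (Pl := map P (seq 0 (2*N+3))) in *.
  assert (HPl : forall i, (i < 2*N+3)%nat -> In (P i) Pl) by (intros i Hi; apply Pts_in; exact Hi).
  pose proof (get_pfacts k Hk) as PF. destruct PF as [Pcs Ps Psc Pco Ps2 Ptd Ptpos Pt1 Pg Pgpos Pg1 Ptg P2tg Pgt Prho Prho1 PcT PcTpos Pcst].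
  induction r as [|r IH]; intros n Hnr.
  - destruct (exists_route k Pl (P O) Hk HGP (HPl O ltac:(lia)) (P (S n)) (HPl (S n) ltac:(lia))) as [l Hl].
    exists l. split; [exact Hl|]. pose proof (path_length_nonneg l).
    unfold Bf. replace n with (2 * N)%nat by lia. replace (g_ k ^ (2 * N) - g_ k ^ (2 * N)) with 0 by ring.
    unfold Rdiv. rewrite Rmult_0_r, Rmult_0_l. lra.
  - destruct (IH (S n) ltac:(lia)) as [l [Hl Hlen]].
    destruct (Hsteps n ltac:(lia)) as [A1 [A2 [A3 [A4 [A5 [A6 [A7 A10]]]]]]].
    fold P in A1, A2, A3, A4, A5, A6, A7, A10.
    set (e := Nat.even n) in *.
    assert (Hxw : P (S n) <> P O) by (apply in_cone_F in A1; [destruct A1 as [X _]; intro E; apply X; symmetry; exact E| exact Hk]).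
    exists (P (S n) :: l). split.
    + apply rp_step with (P (S (S n))); [exact Hxw| |exact Hl].
      right. split.
      * intros [i [Hc | Hc]].
        -- destruct Hc as [_ [Hci Hmin]].
           pose proof (cone_disj k _ _ _ _ Hk Hci A1) as Ei. subst i.
           specialize (Hmin (P (S (S n))) (HPl (S (S n)) ltac:(lia)) A2). lra.
        -- destruct Hc as [_ [Hci Hmin]].
           pose proof (cone_disj k _ _ _ _ Hk Hci A4) as Ei. subst i.
           specialize (Hmin (P (S (S (S n)))) (HPl (S (S (S n))) ltac:(lia)) A5). lra.
      * exists (iF k e). split; [exact A1|]. split; [apply HPl; lia|]. split; [exact A2|].
        intros z Hz Hcz. destruct (in_Pts _ _ _ z Hz) as [j [Hj Ez]]. subst z. apply A10; assumption.
    + destruct (routing_head _ _ _ _ _ Hl) as [l' El]. rewrite El in *.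
      change (path_length (P (S n) :: P (S (S n)) :: l')) with (pdist (P (S n)) (P (S (S n))) + path_length (P (S (S n)) :: l')).
      unfold Bf in *.
      assert (E : (1 - tau) * (cos (2 * hh k) / co_ k) * (g_ k ^ n - g_ k ^ (2 * N)) / (1 - g_ k)
               = (1 - tau) * (cos (2 * hh k) / co_ k * SS k n) + (1 - tau) * (cos (2 * hh k) / co_ k) * (g_ k ^ S n - g_ k ^ (2 * N)) / (1 - g_ k)).
      { unfold SS. simpl. field. lra. }
      rewrite E. lra.
Qed.


Theorem part2 (k : nat) (hk : (1 <= k)%nat) :
  forall eps : R, eps > 0 ->
     exists (P : list point) (u w : point),
       general_position (4 * k + 4) P /\ In u P /\ In w P /\ u <> w /\
       exists l, routing_path P (4 * k + 4) w u l /\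
         path_length l >= (ratio_R (4 * k + 4) - eps) * pdist u w.
Proof.
  intros eps Heps.
  pose proof (get_pfacts k hk) as PF. destruct PF as [Pcs Ps Psc Pco Ps2 Ptd Ptpos Pt1 Pg Pgpos Pg1 Ptg P2tg Pgt Prho Prho1 PcT PcTpos Pcst].
  rewrite ratio_eq by exact hk. fold (co_ k) (s_ k).
  set (RR := (co_ k + s_ k) / (co_ k - s_ k)).
  assert (HR : 0 < RR) by (unfold RR; apply Rdiv_lt_0_compat; lra).
  set (e1 := Rmin (eps / (2 * RR)) (1/2)).
  assert (He1 : 0 < e1) by (unfold e1; apply Rmin_glb_lt; [apply Rdiv_lt_0_compat; lra| lra]).
  assert (He1a : e1 <= eps / (2 * RR)) by apply Rmin_l.
  assert (He1b : e1 <= 1/2) by apply Rmin_r.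
  set (tau := e1 / 2).
  assert (Htau : 0 < tau < 1) by (unfold tau; lra).
  destruct (pow_lt_1_zero (g_ k) ltac:(rewrite Rabs_pos_eq; lra) e1 He1) as [N0 HN0].
  set (N := (N0 + 1)%nat).
  assert (HG : g_ k ^ (2 * N) < e1).
  { specialize (HN0 (2 * N)%nat ltac:(unfold N; lia)). rewrite Rabs_pos_eq in HN0 by (apply pow_le; lra). exact HN0. }
  set (Q := Qb k N).
  assert (HL0 : Lin0 Q true 0 1 (-1) 0 > - (1 + tau)).
  { unfold Q. rewrite Lin0_0S. unfold pZ, lZ. simpl. unfold SS. simpl. lra. }
  assert (Hev : ev (fun d => (forall n, (n < 2 * N)%nat -> StepOK k N tau d n) /\ GPfacts Q (4*k+4) (2*N+3) d /\
                     Lin Q d true 0 1 (-1) 0 > - (1 + tau))).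
  { apply ev_and; [|apply ev_and; [apply ev_GPfacts| apply lin_stable; exact HL0]].
    apply ev_forall. intros n Hn. apply ev_StepOK; [exact hk| exact Htau| lia]. }
  destruct Hev as [eta [Heta Hd]].
  set (d := eta / 2).
  destruct (Hd d ltac:(unfold d; lra)) as [Hsteps [HGPf HLd]].
  set (Pl := map (Pt Q d) (seq 0 (2*N+3))).
  assert (HGP : general_position (4*k+4) Pl) by (apply GP_of_facts; exact HGPf).
  exists Pl, (Pt Q d 1%nat), (Pt Q d 0%nat).
  destruct (Hsteps 0%nat ltac:(unfold N; lia)) as [A1 _].
  apply in_cone_F in A1; [|exact hk]. destruct A1 as [Hne [Hpar Hlat]].
  split; [exact HGP|]. split; [apply Pts_in; lia|]. split; [apply Pts_in; lia|].
  split; [intro E; apply Hne; symmetry; exact E|].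
  destruct (chain k N tau d hk Htau HGP Hsteps (2 * N) 0 ltac:(lia)) as [l [Hl Hlen]].
  exists l. split; [exact Hl|].
  fold Q in Hne, Hpar, Hlat, Hl, Hlen. change (cos (hh k)) with (co_ k) in *. change (sin (hh k)) with (s_ k) in *.
  set (u := Pt Q d 1%nat) in *. set (w := Pt Q d 0%nat) in *.
  unfold Lin in HLd. fold u w in HLd.
  rewrite par_sub, lat_sub in *. simpl Nat.even in *.
  set (pp := par true w - par true u) in *. set (ll := lat true w - lat true u) in *.
  assert (Hpp : pp < 1 + tau) by lra.
  assert (Hdist : pdist u w <= (1 + tau) / co_ k).
  { unfold pdist. apply sqrt_le_sq; [apply Rlt_le; apply Rdiv_lt_0_compat; lra|].
    replace ((fst w - fst u) ^ 2 + (snd w - snd u) ^ 2) with (ll * ll + pp * pp) by (unfold ll, pp, par, lat; ring).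
    assert (Hl2 : co_ k * co_ k * (ll * ll) <= s_ k * s_ k * (pp * pp)).
    { replace (co_ k * co_ k * (ll * ll)) with ((co_ k * Rabs ll) * (co_ k * Rabs ll)) by (rewrite <- (abs_sq ll); ring).
      assert (0 <= co_ k * Rabs ll) by (apply Rmult_le_pos; [lra| apply Rabs_pos]).
      nra. }
    assert (Hpp2 : pp * pp <= (1 + tau) * (1 + tau)) by nra.
    replace ((1 + tau) / co_ k * ((1 + tau) / co_ k)) with ((1 + tau) * (1 + tau) / (co_ k * co_ k)) by (field; lra).
    apply Rmult_le_reg_r with (co_ k * co_ k); [nra|].
    unfold Rdiv. rewrite Rmult_assoc, Rinv_l by nra. rewrite Rmult_1_r.
    nra. }
  assert (HRc : cos (2 * hh k) / (1 - g_ k) = RR).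
  { unfold RR. assert (E : 1 - g_ k = (co_ k - s_ k) * (co_ k - s_ k)) by (rewrite Pg; nra).
    rewrite E, PcT. field. lra. }
  assert (HBf : Bf k N tau 0 = (1 - tau) * (1 - g_ k ^ (2 * N)) * RR / co_ k).
  { unfold Bf. rewrite <- HRc. simpl pow. field. split; lra. }
  rewrite HBf in Hlen.
  assert (HG0 : 0 <= g_ k ^ (2 * N)) by (apply pow_le; lra).
  assert (Hpd : 0 <= pdist u w) by apply sqrt_pos.
  destruct (Rle_dec (RR - eps) 0) as [Hneg|Hpos].
  - assert (0 <= (1 - tau) * (1 - g_ k ^ (2 * N)) * RR / co_ k).
    { unfold Rdiv. apply Rmult_le_pos; [|left; apply Rinv_0_lt_compat; lra].
      apply Rmult_le_pos; [|lra]. apply Rmult_le_pos; lra. }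
    assert ((RR - eps) * pdist u w <= 0) by nra. lra.
  - assert (H1 : (RR - eps) * pdist u w <= (RR - eps) * ((1 + tau) / co_ k)) by (apply Rmult_le_compat_l; lra).
    assert (H2 : (RR - eps) * (1 + tau) <= (1 - tau) * (1 - g_ k ^ (2 * N)) * RR).
    { assert (Heps2 : RR - eps <= RR * (1 - 2 * e1)).
      { assert (2 * RR * e1 <= eps).
        { apply Rmult_le_reg_r with (/ (2 * RR)); [apply Rinv_0_lt_compat; lra|].
          replace (2 * RR * e1 * / (2 * RR)) with e1 by (field; lra). exact He1a. }
        lra. }
      assert (Hfac : (1 - 2 * e1) * (1 + tau) <= (1 - tau) * (1 - g_ k ^ (2 * N))).
      { unfold tau. nra. }
      assert (0 <= 1 + tau) by lra.
      assert ((RR - eps) * (1 + tau) <= RR * (1 - 2 * e1) * (1 + tau)) by (apply Rmult_le_compat_r; lra).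
      nra. }
    assert (H3 : (RR - eps) * ((1 + tau) / co_ k) <= (1 - tau) * (1 - g_ k ^ (2 * N)) * RR / co_ k).
    { unfold Rdiv. replace ((RR - eps) * ((1 + tau) * / co_ k)) with (((RR - eps) * (1 + tau)) * / co_ k) by ring.
      apply Rmult_le_compat_r; [left; apply Rinv_0_lt_compat; lra| exact H2]. }
    lra.
Qed.


Theorem mainTheorem10 (k : nat) (hk : (1 <= k)%nat) :
  (forall (P : list point) (u w : point),
     general_position (4 * k + 4) P -> In u P -> In w P ->
     (exists l, routing_path P (4 * k + 4) w u l) /\
     (forall l, routing_path P (4 * k + 4) w u l ->
        path_length l <= ratio_R (4 * k + 4) * pdist u w)) /\
  (forall eps : R, eps > 0 ->
     exists (P : list point) (u w : point),
       general_position (4 * k + 4) P /\ In u P /\ In w P /\ u <> w /\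
       exists l, routing_path P (4 * k + 4) w u l /\
         path_length l >= (ratio_R (4 * k + 4) - eps) * pdist u w).
Proof.
  split; [apply part1; exact hk| apply part2; exact hk].
Qed.
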